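(* Let $(H,\alpha)$ be a monoidal Hom-Hopf algebra with bijective antipode $S$, and let $(\Omega^1(H),\beta)$ be its universal Hom-FODC (described in the context). (1) Let $\mathcal{R}\subseteq\ker\varepsilon$ be a subspace with $\alpha(\mathcal{R})=\mathcal{R}$ which is a right Hom-ideal of $(H,\alpha)$. Then $\mathcal{N}:=H\cdot\omega_{\Omega^1(H)}(\mathcal{R})$ is an $(H,\alpha)$-Hom-subbimodule of $(\Omega^1(H),\beta)$, and $(\Gamma,\gamma):=(\Omega^1(H)/\mathcal{N},\bar\beta)$ (with $\bar\beta$ induced by $\beta$ and differential $\bar d h=dh+\mathcal{N}$) is a left-covariant Hom-FODC over $(H,\alpha)$ with $\mathcal{R}_\Gamma=\mathcal{R}$. (2) For any left-covariant $(H,\alpha)$-Hom-FODC $(\Gamma,\gamma)$, $\mathcal{R}_\Gamma$ is a right Hom-ideal of $(H,\alpha)$ (contained in $\ker\varepsilon$) and $\Gamma$ is isomorphic to $\Omega^1(H)/H\cdot\omega_{\Omega^1(H)}(\mathcal{R}_\Gamma)$.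
   Context: All vector spaces are over a field $k$. $\widetilde{\mathcal{H}}(\mathcal{M}_k)$: objects $(M,\mu)$, $\mu$ a linear automorphism of $M$; morphisms are linear maps commuting with the automorphisms. A monoidal Hom-algebra $(A,\alpha)$: multiplication with $\alpha(ab)=\alpha(a)\alpha(b)$, $\alpha(1)=1$, $\alpha(a)(bc)=(ab)\alpha(c)$, $1a=a1=\alpha(a)$. A monoidal Hom-Hopf algebra $(H,\alpha)$ is a monoidal Hom-algebra with comultiplication $\Delta(h)=h_1\otimes h_2$ and counit $\varepsilon$ (algebra maps commuting with $\alpha$) satisfying $\alpha^{-1}(h_1)\otimes h_{21}\otimes h_{22}=h_{11}\otimes h_{12}\otimes\alpha^{-1}(h_2)$, $\varepsilon(h_1)h_2=h_1\varepsilon(h_2)=\alpha^{-1}(h)$, and with an antipode $S$ commuting with $\alpha$ such that $S(h_1)h_2=h_1S(h_2)=\varepsilon(h)1$. Hom-modules/bimodules: $\alpha(a)\cdot(b\cdot m)=(ab)\cdot\mu(m)$, $1\cdot m=\mu(m)$, $(m\cdot a)\cdot\alpha(b)=\mu(m)\cdot(ab)$, $m\cdot1=\mu(m)$, $\alpha(a)\cdot(m\cdot b)=(a\cdot m)\cdot\alpha(b)$. Left Hom-comodule $(M,\mu)$: $\rho(m)=m_{(-1)}\otimes m_{(0)}$ with $\alpha^{-1}(m_{(-1)})\otimes m_{(0)(-1)}\otimes m_{(0)(0)}=m_{(-1)1}\otimes m_{(-1)2}\otimes\mu^{-1}(m_{(0)})$, $\varepsilon(m_{(-1)})m_{(0)}=\mu^{-1}(m)$,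 $\rho\circ\mu=(\alpha\otimes\mu)\circ\rho$. A Hom-FODC over $(H,\alpha)$ is an $(H,\alpha)$-Hom-bimodule $(\Gamma,\gamma)$ with linear $d:H\to\Gamma$, $d(hg)=h\cdot dg+dh\cdot g$, $d\circ\alpha=\gamma\circ d$, and $\Gamma$ spanned by $(h\cdot dg)\cdot f$. It is left-covariant if there is a left Hom-coaction $\phi:\Gamma\to H\otimes\Gamma$ of $(H,\alpha)$ with $\phi(\alpha(h)\cdot(\omega\cdot g))=\Delta(\alpha(h))(\phi(\omega)\Delta(g))$ and $\phi(dh)=h_1\otimes dh_2$ (products in $H\otimes\Gamma$ componentwise: $(h\otimes x)(h'\otimes\omega)=hh'\otimes x\cdot\omega$, $(h'\otimes\omega)(h\otimes x)=h'h\otimes\omega\cdot x$). For a left-covariant Hom-FODC define $\omega_\Gamma(h):=S(h_1)\cdot dh_2$ and $\mathcal{R}_\Gamma:=\{h\in\ker\varepsilon:\ \omega_\Gamma(h)=0\}$. A right Hom-ideal of $(H,\alpha)$ is a subspace $\mathcal{R}$ with $\alpha(\mathcal{R})=\mathcal{R}$ and $\mathcal{R}H\subseteq\mathcal{R}$. Universal Hom-FODC: write $\bar h:=h-\varepsilon(h)1$. $\Omega^1(H):=H\otimes\ker\varepsilon$ with $\beta:=\alpha\otimes\alpha$; for $g,h\in H$ write $g\cdot\omega(h):=g\otimes\bar h$. Its Hom-bimodule structure is $g'\cdot(g\cdot\omega(h))=(\alpha^{-1}(g')g)\cdot\omega(\alpha(h))$ and $(g'\cdot\omega(h))\cdot g=(g'g_1)\cdot\omega(\bar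 h g_2)$, its differential is $dh=h_1\cdot\omega(h_2)$, and $\omega_{\Omega^1(H)}(h)=S(h_1)\cdot dh_2=1\otimes\overline{\alpha^{-1}(h)}$. *)

(* Defs.v *)
From HB Require Import structures.
From mathcomp Require Import all_boot all_algebra.
From mathcomp Require Import boolp.
Set Implicit Arguments. Unset Strict Implicit. Unset Printing Implicit Defensive.
Import GRing.Theory.
Local Open Scope ring_scope.
Local Open Scope quotient_scope.

Definition lin (k : fieldType) (U W : lmodType k) (f : U -> W) : Prop :=
  forall (a : k) (x y : U), f (a *: x + y) = a *: f x + f y.

Definition bilin (k : fieldType) (U V W : lmodType k) (f : U -> V -> W) : Prop :=
  (forall v, lin (fun u => f u v)) /\ (forall u, lin (f u)).

Section Tensor.
Variables (k : fieldType) (U V : lmodType k).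

Definition tsum (W : lmodType k) (f : U -> V -> W) (s : seq (U * V)) : W :=
  \sum_(p <- s) f p.1 p.2.

Definition tequiv (s t : seq (U * V)) : Prop :=
  forall (W : lmodType k) (f : U -> V -> W), bilin f -> tsum f s = tsum f t.

Definition tequivb (s t : seq (U * V)) : bool := `[< tequiv s t >].

Lemma tequivb_refl : reflexive tequivb.
Proof. by move=> s; apply/asboolP. Qed.
Lemma tequivb_sym : symmetric tequivb.
Proof.
by move=> s t; apply/asboolP/asboolP => h W f hf; rewrite h.
Qed.
Lemma tequivb_trans : transitive tequivb.
Proof.
by move=> t s u /asboolP h1 /asboolP h2; apply/asboolP => W f hf; rewrite h1 ?h2.
Qed.

Canonical tequiv_equiv := EquivRel tequivb tequivb_refl tequivb_sym tequivb_trans.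

Definition tensor := {eq_quot tequivb}.
HB.instance Definition _ : EqQuotient _ tequivb tensor := EqQuotient.on tensor.
HB.instance Definition _ := Choice.on tensor.

Definition tlift (W : lmodType k) (f : U -> V -> W) (x : tensor) : W := tsum f (repr x).

Lemma tsum_repr (W : lmodType k) (f : U -> V -> W) s : bilin f ->
  tsum f (repr (\pi_tensor s)) = tsum f s.
Proof.
move=> hf; have : repr (\pi_tensor s) = s %[mod tensor] by rewrite reprK.
by move/eqmodP/asboolP; apply.
Qed.

Lemma tensor_ext (x y : tensor) :
  (forall (W : lmodType k) (f : U -> V -> W), bilin f -> tlift f x = tlift f y) -> x = y.
Proof.
move=> h; rewrite -[x]reprK -[y]reprK; apply/eqmodP/asboolP => W f hf; exact: h.
Qed.

Section BilinFacts.
Variables (W : lmodType k) (f : U -> V -> W) (hf : bilin f).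
Lemma bl0 v : f 0 v = 0.
Proof.
have := hf.1 v 1 0 0; rewrite !scale1r addr0 => h.
by apply: (@addrI _ (f 0 v)); rewrite addr0 -h.
Qed.
Lemma blZ a u v : f (a *: u) v = a *: f u v.
Proof. by have := hf.1 v a u 0; rewrite addr0 bl0 addr0. Qed.
Lemma blD u u' v : f (u + u') v = f u v + f u' v.
Proof. by have := hf.1 v 1 u u'; rewrite !scale1r. Qed.
Lemma blN u v : f (- u) v = - f u v.
Proof. by rewrite -scaleN1r blZ scaleN1r. Qed.
End BilinFacts.

Definition tzero : tensor := \pi_tensor [::].
Definition tadd (x y : tensor) : tensor := \pi_tensor (repr x ++ repr y).
Definition topp (x : tensor) : tensor :=
  \pi_tensor (map (fun p => (- p.1, p.2)) (repr x)).
Definition tscale (a : k) (x : tensor) : tensor :=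
  \pi_tensor (map (fun p => (a *: p.1, p.2)) (repr x)).

Lemma tsum_cat (W : lmodType k) (f : U -> V -> W) s t : tsum f (s ++ t) = tsum f s + tsum f t.
Proof. by rewrite /tsum big_cat. Qed.
Lemma tsum_nil (W : lmodType k) (f : U -> V -> W) : tsum f [::] = 0.
Proof. by rewrite /tsum big_nil. Qed.
Lemma tsum_opp (W : lmodType k) (f : U -> V -> W) s : bilin f ->
  tsum f (map (fun p => (- p.1, p.2)) s) = - tsum f s.
Proof.
move=> hf; rewrite /tsum big_map -sumrN; apply: eq_bigr => p _ /=; exact: blN.
Qed.
Lemma tsum_scale (W : lmodType k) (f : U -> V -> W) a s : bilin f ->
  tsum f (map (fun p => (a *: p.1, p.2)) s) = a *: tsum f s.
Proof.
move=> hf; rewrite /tsum big_map scaler_sumr; apply: eq_bigr => p _ /=; exact: blZ.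
Qed.

Ltac tsimp := rewrite /tlift /tadd /topp /tscale /tzero;
  repeat (rewrite ?tsum_repr ?tsum_cat ?tsum_nil ?tsum_opp ?tsum_scale //).

Lemma taddA : associative tadd.
Proof. move=> x y z; apply: tensor_ext => W f hf; tsimp; by rewrite addrA. Qed.
Lemma taddC : commutative tadd.
Proof. move=> x y; apply: tensor_ext => W f hf; tsimp; by rewrite addrC. Qed.
Lemma tadd0 : left_id tzero tadd.
Proof. move=> x; apply: tensor_ext => W f hf; tsimp; by rewrite add0r. Qed.
Lemma taddN : left_inverse tzero topp tadd.
Proof. move=> x; apply: tensor_ext => W f hf; tsimp; by rewrite addNr. Qed.

HB.instance Definition _ := GRing.isZmodule.Build tensor taddA taddC tadd0 taddN.

Lemma tscaleA a b x : tscale a (tscale b x) = tscale (a * b) x.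
Proof. apply: tensor_ext => W f hf; tsimp; by rewrite scalerA. Qed.
Lemma tscale1 : left_id 1 tscale.
Proof. move=> x; apply: tensor_ext => W f hf; tsimp; by rewrite scale1r. Qed.
Lemma tscaleDr : right_distributive tscale +%R.
Proof. move=> a x y; apply: tensor_ext => W f hf; rewrite /GRing.add /=. tsimp; by rewrite scalerDr. Qed.
Lemma tscaleDl x : {morph tscale^~ x : a b / a + b}.
Proof. move=> a b; apply: tensor_ext => W f hf; rewrite /GRing.add /=. tsimp; by rewrite scalerDl. Qed.

HB.instance Definition _ := GRing.Zmodule_isLmodule.Build k tensor tscaleA tscale1 tscaleDr tscaleDl.

Definition tpure (u : U) (v : V) : tensor := \pi_tensor [:: (u, v)].

End Tensor.

Arguments tpure {k U V}.

Section TensorOps.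
Variable k : fieldType.

Definition tmap (U V U' V' : lmodType k) (f : U -> U') (g : V -> V')
  (x : tensor U V) : tensor U' V' :=
  tlift (fun a b => tpure (f a) (g b)) x.

Definition tassoc (U V W : lmodType k) (x : tensor (tensor U V) W) : tensor U (tensor V W) :=
  tlift (fun t w => tlift (fun u v => tpure u (tpure v w)) t) x.

Definition tmul2 (A B C D E F : lmodType k) (f : A -> C -> E) (g : B -> D -> F)
  (x : tensor A B) (y : tensor C D) : tensor E F :=
  tlift (fun a b => tlift (fun c d => tpure (f a c) (g b d)) y) x.

End TensorOps.

Definition inspan (k : fieldType) (V : lmodType k) (P : V -> Prop) (x : V) : Prop :=
  exists s : seq (k * V), (forall p, p \in s -> P p.2) /\ x = \sum_(p <- s) p.1 *: p.2.

Record subspace (k : fieldType) (V : lmodType k) (P : V -> Prop) : Prop := {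
  subspace0 : P 0;
  subspaceD : forall x y, P x -> P y -> P (x + y);
  subspaceZ : forall (a : k) x, P x -> P (a *: x) }.

Record HomHopfData (k : fieldType) (H : lmodType k) := {
  hmul : H -> H -> H;
  hone : H;
  halpha : H -> H;
  halphai : H -> H;
  hDelta : H -> tensor H H;
  heps : {scalar H};
  hS : H -> H }.

Section HomHopf.
Variables (k : fieldType) (H : lmodType k) (A : HomHopfData H).
Local Notation mul := (hmul A).
Local Notation one := (hone A).
Local Notation alpha := (halpha A).
Local Notation alphai := (halphai A).
Local Notation Delta := (hDelta A).
Local Notation eps := (heps A).
Local Notation S := (hS A).

Record isHomHopf : Prop := {
  hh_alpha_lin : lin alpha;
  hh_alphaK : cancel alpha alphai;
  hh_alphaiK : cancel alphai alpha;
  hh_mul_bilin : bilin mul;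
  hh_alpha_mul : forall a b, alpha (mul a b) = mul (alpha a) (alpha b);
  hh_alpha_one : alpha one = one;
  hh_mul_assoc : forall a b c, mul (alpha a) (mul b c) = mul (mul a b) (alpha c);
  hh_one_mul : forall a, mul one a = alpha a;
  hh_mul_one : forall a, mul a one = alpha a;
  hh_Delta_lin : lin Delta;
  hh_Delta_mul : forall a b, Delta (mul a b) = tmul2 mul mul (Delta a) (Delta b);
  hh_Delta_one : Delta one = tpure one one;
  hh_Delta_alpha : forall h, Delta (alpha h) = tmap alpha alpha (Delta h);
  hh_eps_mul : forall a b, eps (mul a b) = eps a * eps b;
  hh_eps_one : eps one = 1;
  hh_eps_alpha : forall h, eps (alpha h) = eps h;
  hh_coassoc : forall h,
    tmap alphai Delta (Delta h) = tassoc (tmap Delta alphai (Delta h));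
  hh_counitl : forall h, tlift (fun a b => eps a *: b) (Delta h) = alphai h;
  hh_counitr : forall h, tlift (fun a b => eps b *: a) (Delta h) = alphai h;
  hh_S_lin : lin S;
  hh_S_alpha : forall h, S (alpha h) = alpha (S h);
  hh_S_l : forall h, tlift (fun a b => mul (S a) b) (Delta h) = eps h *: one;
  hh_S_r : forall h, tlift (fun a b => mul a (S b)) (Delta h) = eps h *: one }.

Record isHomBimodule (M : lmodType k) (mu mui : M -> M)
    (lact : H -> M -> M) (ract : M -> H -> M) : Prop := {
  hb_mu_lin : lin mu;
  hb_muK : cancel mu mui;
  hb_muiK : cancel mui mu;
  hb_lact_bilin : bilin lact;
  hb_ract_bilin : bilin ract;
  hb_lact_mor : forall a m, mu (lact a m) = lact (alpha a) (mu m);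
  hb_ract_mor : forall m a, mu (ract m a) = ract (mu m) (alpha a);
  hb_lassoc : forall a b m, lact (alpha a) (lact b m) = lact (mul a b) (mu m);
  hb_lunit : forall m, lact one m = mu m;
  hb_rassoc : forall m a b, ract (ract m a) (alpha b) = ract (mu m) (mul a b);
  hb_runit : forall m, ract m one = mu m;
  hb_bimod : forall a m b, lact (alpha a) (ract m b) = ract (lact a m) (alpha b) }.

Record isHomLComodule (M : lmodType k) (mu mui : M -> M) (rho : M -> tensor H M) : Prop := {
  hc_rho_lin : lin rho;
  hc_coassoc : forall m, tmap alphai rho (rho m) = tassoc (tmap Delta mui (rho m));
  hc_counit : forall m, tlift (fun a x => eps a *: x) (rho m) = mui m;
  hc_mor : forall m, rho (mu m) = tmap alpha mu (rho m) }.

Record isHomFODC (G : lmodType k) (gamma gammai : G -> G)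
    (lact : H -> G -> G) (ract : G -> H -> G) (d : H -> G) : Prop := {
  fo_bimodule : isHomBimodule gamma gammai lact ract;
  fo_d_lin : lin d;
  fo_leibniz : forall h g, d (mul h g) = lact h (d g) + ract (d h) g;
  fo_d_alpha : forall h, d (alpha h) = gamma (d h);
  fo_span : forall w, inspan (fun x => exists h g f, x = ract (lact h (d g)) f) w }.

Definition isLeftCovHomFODC (G : lmodType k) (gamma gammai : G -> G)
    (lact : H -> G -> G) (ract : G -> H -> G) (d : H -> G) : Prop :=
  isHomFODC gamma gammai lact ract d /\
  exists phi : G -> tensor H G,
    [/\ isHomLComodule gamma gammai phi,
        (forall h w g, phi (lact (alpha h) (ract w g)) =
           tmul2 mul lact (Delta (alpha h)) (tmul2 mul ract (phi w) (Delta g))) &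
        (forall h, phi (d h) = tmap id d (Delta h))].

Definition omegaG (G : lmodType k) (lact : H -> G -> G) (d : H -> G) (h : H) : G :=
  tlift (fun a b => lact (S a) (d b)) (Delta h).

Definition RGamma (G : lmodType k) (lact : H -> G -> G) (d : H -> G) (h : H) : Prop :=
  eps h = 0 /\ omegaG lact d h = 0.

Definition rightHomIdeal (R : H -> Prop) : Prop :=
  [/\ subspace R,
      (forall x, R x -> R (alpha x)),
      (forall y, R y -> exists x, R x /\ y = alpha x) &
      (forall r h, R r -> R (mul r h))].

Definition kerEps_pred : {pred H} := [pred x | eps x == 0].

Lemma kerEps_closed : GRing.subsemimod_closed kerEps_pred.
Proof.
split; [split|].
- by rewrite inE linear0.
- by move=> x y; rewrite !inE linearD => /eqP -> /eqP ->; rewrite addr0.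
- by move=> a x; rewrite !inE linearZ => /eqP ->; rewrite /= mulr0.
Qed.

HB.instance Definition _ := GRing.isSubmodClosed.Build k H kerEps_pred kerEps_closed.

Record kerEps := KerEps { keval :> H; _ : keval \in kerEps_pred }.
HB.instance Definition _ := [isSub for keval].
HB.instance Definition _ := [Choice of kerEps by <:].
HB.instance Definition _ := [SubChoice_isSubLmodule of kerEps by <:].

Definition bar (h : H) : kerEps := insubd 0 (h - eps h *: one).

Definition Omega1 := tensor H kerEps.

(* g . omega(h) *)
Definition omU (g h : H) : Omega1 := tpure g (bar h).

Definition lactU (g' : H) (w : Omega1) : Omega1 :=
  tlift (fun g (x : kerEps) => omU (mul (alphai g') g) (alpha (keval x))) w.

Definition ractU (w : Omega1) (g : H) : Omega1 :=
  tlift (fun g' (x : kerEps) =>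
    tlift (fun a b => omU (mul g' a) (mul (keval x) b)) (Delta g)) w.

Definition betaU (w : Omega1) : Omega1 :=
  tmap alpha (fun x : kerEps => bar (alpha (keval x))) w.

Definition dU (h : H) : Omega1 := tlift (fun a b => omU a b) (Delta h).

Definition NU (R : H -> Prop) (w : Omega1) : Prop :=
  inspan (fun x => exists h r, R r /\ x = lactU h (omegaG lactU dU r)) w.

Definition homSubbimoduleU (N : Omega1 -> Prop) : Prop :=
  [/\ subspace N,
      (forall h w, N w -> N (lactU h w)),
      (forall w h, N w -> N (ractU w h)),
      (forall w, N w -> N (betaU w)) &
      (forall w, N w -> exists w', N w' /\ w = betaU w')].

End HomHopf.

Arguments isHomHopf {k H} A.
Arguments isHomBimodule {k H} A {M}.
Arguments isHomLComodule {k H} A {M}.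
Arguments isHomFODC {k H} A {G}.
Arguments isLeftCovHomFODC {k H} A {G}.
Arguments omegaG {k H} A {G}.
Arguments RGamma {k H} A {G}.
Arguments rightHomIdeal {k H} A.
Arguments kerEps {k H} A.
Arguments bar {k H} A.
Arguments Omega1 {k H} A.
Arguments omU {k H} A.
Arguments lactU {k H} A.
Arguments ractU {k H} A.
Arguments betaU {k H} A.
Arguments dU {k H} A.
Arguments NU {k H} A.
Arguments homSubbimoduleU {k H} A.

(* Main.v *)
Require Import Defs.
From HB Require Import structures.
From mathcomp Require Import all_boot all_algebra.
From mathcomp Require Import boolp.
Set Implicit Arguments. Unset Strict Implicit. Unset Printing Implicit Defensive.
Import GRing.Theory.
Local Open Scope ring_scope.

Module T.
Set Implicit Arguments. Unset Strict Implicit. Unset Printing Implicit Defensive.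
Import GRing.Theory.
Local Open Scope ring_scope.
Local Open Scope quotient_scope.

Section LinFacts.
Variables (k : fieldType) (U W : lmodType k) (f : U -> W) (hf : lin f).
Lemma lin0 : f 0 = 0.
Proof. have := hf 1 0 0; rewrite !scale1r !addr0 => h. by apply: (@addrI _ (f 0)); rewrite addr0 -h. Qed.
Lemma linD x y : f (x + y) = f x + f y.
Proof. by have := hf 1 x y; rewrite !scale1r. Qed.
Lemma linZ a x : f (a *: x) = a *: f x.
Proof. by have := hf a x 0; rewrite !addr0 lin0 addr0. Qed.
Lemma linN x : f (- x) = - f x.
Proof. by rewrite -scaleN1r linZ scaleN1r. Qed.
Lemma linB x y : f (x - y) = f x - f y.
Proof. by rewrite linD linN. Qed.
Lemma lin_sum (I : Type) (s : seq I) (P : pred I) (F : I -> U) :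
  f (\sum_(i <- s | P i) F i) = \sum_(i <- s | P i) f (F i).
Proof. by apply: (big_morph f linD lin0). Qed.
End LinFacts.

Lemma linP (k : fieldType) (U W : lmodType k) (f : U -> W) :
  (forall x y, f (x + y) = f x + f y) -> (forall a x, f (a *: x) = a *: f x) -> lin f.
Proof. by move=> hD hZ a x y; rewrite hD hZ. Qed.

Lemma bilinP (k : fieldType) (U V W : lmodType k) (f : U -> V -> W) :
  (forall x y v, f (x + y) v = f x v + f y v) -> (forall a x v, f (a *: x) v = a *: f x v) ->
  (forall u x y, f u (x + y) = f u x + f u y) -> (forall u a x, f u (a *: x) = a *: f u x) ->
  bilin f.
Proof. by move=> h1 h2 h3 h4; split=> ?; apply: linP. Qed.

Lemma lin_id (k : fieldType) (U : lmodType k) : lin (@id U).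
Proof. by []. Qed.

Lemma lin_comp (k : fieldType) (U V W : lmodType k) (f : V -> W) (g : U -> V) :
  lin f -> lin g -> lin (fun x => f (g x)).
Proof. by move=> hf hg a x y; rewrite hg hf. Qed.

Section TensorLemmas.
Variables (k : fieldType) (U V : lmodType k).
Local Notation T := (tensor U V).

Lemma tliftE (W : lmodType k) (f : U -> V -> W) (x : T) :
  tlift f x = \sum_(p <- repr x) f p.1 p.2.
Proof. by []. Qed.

Section Bil.
Variables (W : lmodType k) (f : U -> V -> W) (hf : bilin f).
Lemma tlift_pure u v : tlift f (tpure u v) = f u v.
Proof. by rewrite /tlift /tpure tsum_repr // /tsum big_seq1. Qed.
Lemma tliftD x y : tlift f (x + y) = tlift f x + tlift f y.
Proof. by rewrite {1}/tlift /GRing.add /= /tadd tsum_repr // tsum_cat. Qed.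
Lemma tliftZ a x : tlift f (a *: x) = a *: tlift f x.
Proof. by rewrite {1}/tlift /GRing.scale /= /tscale tsum_repr // tsum_scale. Qed.
Lemma tlift_lin : lin (tlift f).
Proof. by apply: linP; [apply: tliftD | apply: tliftZ]. Qed.
Lemma tlift0 : tlift f 0 = 0.
Proof. exact: (lin0 tlift_lin). Qed.
Lemma tlift_sum (I : Type) (s : seq I) (P : pred I) (F : I -> T) :
  tlift f (\sum_(i <- s | P i) F i) = \sum_(i <- s | P i) tlift f (F i).
Proof. exact: (lin_sum tlift_lin). Qed.
End Bil.

Lemma tpure_bilin : bilin (@tpure k U V).
Proof.
split=> [v|u] a x y; apply: tensor_ext => W f hf; rewrite (tliftD hf) (tliftZ hf) !(tlift_pure hf).
  by rewrite (blD hf) (blZ hf).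
by rewrite hf.2.
Qed.

Lemma tensor_sum (x : T) : x = \sum_(p <- repr x) tpure p.1 p.2.
Proof.
apply: tensor_ext => W f hf; rewrite (tlift_sum hf); apply: eq_bigr => p _.
by rewrite (tlift_pure hf).
Qed.

Lemma lin_tlift (W W' : lmodType k) (L : W -> W') (G : U -> V -> W) (x : T) :
  lin L -> L (tlift G x) = tlift (fun a b => L (G a b)) x.
Proof. by move=> hL; rewrite /tlift /tsum (lin_sum hL). Qed.

Lemma tensor_lin_ext (W : lmodType k) (F G : T -> W) :
  lin F -> lin G -> (forall u v, F (tpure u v) = G (tpure u v)) -> forall x, F x = G x.
Proof.
move=> hF hG h x; rewrite (tensor_sum x) (lin_sum hF) (lin_sum hG).
by apply: eq_bigr => p _.
Qed.

Lemma tlift_ext (W : lmodType k) (F G : U -> V -> W) (x : T) :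
  (forall u v, F u v = G u v) -> tlift F x = tlift G x.
Proof. by move=> h; rewrite /tlift /tsum; apply: eq_bigr => p _. Qed.

Lemma tpureD1 x y v : tpure (x + y) v = tpure x v + tpure y v :> T.
Proof. exact: (blD tpure_bilin). Qed.
Lemma tpureZ1 a x v : tpure (a *: x) v = a *: tpure x v :> T.
Proof. exact: (blZ tpure_bilin). Qed.
Lemma tpureD2 u x y : tpure u (x + y) = tpure u x + tpure u y :> T.
Proof. exact: (linD (tpure_bilin.2 u)). Qed.
Lemma tpureZ2 u a x : tpure u (a *: x) = a *: tpure u x :> T.
Proof. exact: (linZ (tpure_bilin.2 u)). Qed.

End TensorLemmas.

Lemma tlift_tlift (k : fieldType) (U V U' V' W : lmodType k) (F : U' -> V' -> W)
  (G : U -> V -> tensor U' V') (x : tensor U V) :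
  bilin F -> tlift F (tlift G x) = tlift (fun a b => tlift F (G a b)) x.
Proof. by move=> hF; rewrite (lin_tlift _ _ (tlift_lin hF)). Qed.

Section TensorOpsLemmas.
Variable k : fieldType.

Lemma tlift_tmap (U V U' V' W : lmodType k) (F : U' -> V' -> W) (f : U -> U') (g : V -> V') x :
  bilin F -> tlift F (tmap f g x) = tlift (fun a b => F (f a) (g b)) x.
Proof.
by move=> hF; rewrite /tmap tlift_tlift //; apply: tlift_ext => a b; rewrite tlift_pure.
Qed.

Lemma tlift_tmul2 (A B C D E F : lmodType k) (W : lmodType k) (G : E -> F -> W)
  (f : A -> C -> E) (g : B -> D -> F) x y :
  bilin G -> tlift G (tmul2 f g x y) =
    tlift (fun a b => tlift (fun c d => G (f a c) (g b d)) y) x.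
Proof.
move=> hG; rewrite /tmul2 tlift_tlift //; apply: tlift_ext => a b.
rewrite tlift_tlift //; apply: tlift_ext => c d; by rewrite tlift_pure.
Qed.

Lemma tassoc_fun_bilin (U V W : lmodType k) :
  bilin (fun (t : tensor U V) (w : W) => tlift (fun u v => tpure u (tpure v w)) t).
Proof.
split=> [w|t].
  apply: tlift_lin; split=> [v|u] a x y /=.
    by rewrite tpureD1 tpureZ1.
  by rewrite tpureD1 tpureZ1 tpureD2 tpureZ2.
move=> a x y; rewrite /tlift /tsum scaler_sumr -big_split /=; apply: eq_bigr => p _.
by rewrite tpureD2 tpureZ2 tpureD2 tpureZ2.
Qed.

Lemma tassoc_lin (U V W : lmodType k) : lin (@tassoc k U V W).
Proof. exact: tlift_lin (tassoc_fun_bilin U V W). Qed.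

Lemma tassoc_pure (U V W : lmodType k) (t : tensor U V) (w : W) :
  tassoc (tpure t w) = tlift (fun u v => tpure u (tpure v w)) t.
Proof. by rewrite /tassoc tlift_pure //; apply: tassoc_fun_bilin. Qed.

Lemma tmap_lin (U V U' V' : lmodType k) (f : U -> U') (g : V -> V') :
  lin f -> lin g -> lin (tmap f g).
Proof.
move=> hf hg; apply: tlift_lin; split=> [v|u] a x y /=.
  by rewrite (linD hf) (linZ hf) tpureD1 tpureZ1.
by rewrite (linD hg) (linZ hg) tpureD2 tpureZ2.
Qed.

Lemma tmap_pure (U V U' V' : lmodType k) (f : U -> U') (g : V -> V') u v :
  lin f -> lin g -> tmap f g (tpure u v) = tpure (f u) (g v).
Proof.
move=> hf hg; rewrite /tmap tlift_pure //; split=> [w|u'] a x y /=.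
  by rewrite (linD hf) (linZ hf) tpureD1 tpureZ1.
by rewrite (linD hg) (linZ hg) tpureD2 tpureZ2.
Qed.

Definition trilin (U V X W : lmodType k) (F : U -> V -> X -> W) : Prop :=
  [/\ forall b c, lin (fun a => F a b c), forall a c, lin (fun b => F a b c) &
      forall a b, lin (F a b)].

Lemma bilin_tlift2 (U V X W : lmodType k) (F : U -> V -> X -> W) :
  trilin F -> bilin (fun a (t : tensor V X) => tlift (F a) t).
Proof.
case=> h1 h2 h3; split=> [t|a].
  move=> c x y; rewrite /tlift /tsum scaler_sumr -big_split /=; apply: eq_bigr => p _.
  by rewrite (h1 _ _ c x y).
apply: tlift_lin; split=> [v|u]; [exact: h2 | exact: h3].
Qed.

End TensorOpsLemmas.

Section Span.
Variables (k : fieldType) (V : lmodType k) (P : V -> Prop).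
Lemma inspan0 : inspan P 0.
Proof. by exists [::]; split=> //; rewrite big_nil. Qed.
Lemma inspan_gen x : P x -> inspan P x.
Proof.
move=> h; exists [:: (1, x)]; split; last by rewrite big_seq1 scale1r.
by move=> p; rewrite inE => /eqP ->.
Qed.
Lemma inspanD x y : inspan P x -> inspan P y -> inspan P (x + y).
Proof.
move=> [s [hs ->]] [t [ht ->]]; exists (s ++ t); split; last by rewrite big_cat.
by move=> p; rewrite mem_cat => /orP [/hs|/ht].
Qed.
Lemma inspanZ a x : inspan P x -> inspan P (a *: x).
Proof.
move=> [s [hs ->]]; exists (map (fun p => (a * p.1, p.2)) s); split.
  by move=> p /mapP [q /hs hq ->].
by rewrite big_map scaler_sumr; apply: eq_bigr => p _; rewrite scalerA.
Qed.
Lemma inspan_subspace : subspace (inspan P).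
Proof. by split; [apply: inspan0 | apply: inspanD | apply: inspanZ]. Qed.
Lemma inspan_sum (I : Type) (s : seq I) (F : I -> V) :
  (forall i, inspan P (F i)) -> inspan P (\sum_(i <- s) F i).
Proof.
move=> h; elim: s => [|i s ih]; first by rewrite big_nil; apply: inspan0.
by rewrite big_cons; apply: inspanD.
Qed.
Lemma inspan_ind (Q : V -> Prop) : subspace Q -> (forall x, P x -> Q x) ->
  forall x, inspan P x -> Q x.
Proof.
move=> [h0 hD hZ] hP x [s [hs ->]]; elim: s hs => [|p s ih] hs.
  by rewrite big_nil.
rewrite big_cons; apply: hD; first by apply: hZ; apply: hP; apply: hs; rewrite inE eqxx.
by apply: ih => q hq; apply: hs; rewrite inE hq orbT.
Qed.
End Span.

Lemma inspan_lin (k : fieldType) (V W : lmodType k) (P : V -> Prop) (Q : W -> Prop) (f : V -> W) :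
  lin f -> (forall x, P x -> Q (f x)) -> forall x, inspan P x -> inspan Q (f x).
Proof.
move=> hf hPQ x; apply: (@inspan_ind _ _ _ (fun x => inspan Q (f x))).
  split; first by rewrite (lin0 hf); apply: inspan0.
    by move=> ? ? ? ?; rewrite (linD hf); apply: inspanD.
  by move=> ? ? ?; rewrite (linZ hf); apply: inspanZ.
by move=> y hy; apply: inspan_gen; apply: hPQ.
Qed.

Lemma bilin_comp (k : fieldType) (U V U' V' W : lmodType k) (F : U' -> V' -> W)
  (L1 : U -> U') (L2 : V -> V') : bilin F -> lin L1 -> lin L2 -> bilin (fun a b => F (L1 a) (L2 b)).
Proof.
move=> hF h1 h2; split=> [v|u] c x y /=.
  by rewrite h1 hF.1.
by rewrite h2 hF.2.
Qed.

Lemma bilin_tlift_param (k : fieldType) (U V X Y W : lmodType k)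
  (K : U -> V -> X -> Y -> W) (t : tensor X Y) :
  (forall c d, bilin (fun a b => K a b c d)) -> bilin (fun a b => tlift (K a b) t).
Proof.
move=> hK; split=> [v|u] c x y; rewrite /tlift /tsum scaler_sumr -big_split /=;
  apply: eq_bigr => p _.
  by rewrite ((hK p.1 p.2).1 v c x y).
by rewrite ((hK p.1 p.2).2 u c x y).
Qed.

Lemma lin_tlift_param (k : fieldType) (U X Y W : lmodType k)
  (K : U -> X -> Y -> W) (t : tensor X Y) :
  (forall c d, lin (fun a => K a c d)) -> lin (fun a => tlift (K a) t).
Proof.
move=> hK c x y; rewrite /tlift /tsum scaler_sumr -big_split /=; apply: eq_bigr => p _.
by rewrite (hK p.1 p.2 c x y).
Qed.

Lemma tlift_exchange (k : fieldType) (U V X Y W : lmodType k)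
  (F : U -> V -> X -> Y -> W) (s : tensor U V) (t : tensor X Y) :
  tlift (fun a b => tlift (F a b) t) s = tlift (fun c d => tlift (fun a b => F a b c d) s) t.
Proof. by rewrite /tlift /tsum; apply: exchange_big. Qed.

Lemma tlift_tassoc (k : fieldType) (U V X W : lmodType k) (F : U -> tensor V X -> W)
  (x : tensor (tensor U V) X) :
  bilin F -> tlift F (tassoc x) = tlift (fun t w => tlift (fun u v => F u (tpure v w)) t) x.
Proof.
move=> hF; rewrite /tassoc tlift_tlift //; apply: tlift_ext => t w.
rewrite tlift_tlift //; apply: tlift_ext => u v; by rewrite tlift_pure.
Qed.

Lemma tassoc_G_bilin (k : fieldType) (U V X W : lmodType k) (F : U -> tensor V X -> W) :
  bilin F -> bilin (fun (t : tensor U V) (w : X) => tlift (fun u v => F u (tpure v w)) t).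
Proof.
move=> hF; split=> [w|t].
  apply: tlift_lin; apply: (bilin_comp hF) => //; exact: (tpure_bilin _ _).1.
apply: lin_tlift_param => u v; apply: lin_comp; [exact: hF.2 | exact: (tpure_bilin _ _).2].
Qed.

Section Tmul2.
Variables (k : fieldType) (A B C D E F : lmodType k) (f : A -> C -> E) (g : B -> D -> F).
Hypotheses (hf : bilin f) (hg : bilin g).
Lemma tmul2_lin1 y : lin (fun x => tmul2 f g x y).
Proof.
apply: tlift_lin; apply: bilin_tlift_param => c d.
apply: (bilin_comp (tpure_bilin _ _)); [exact: hf.1 | exact: hg.1].
Qed.
Lemma tmul2_lin2 x : lin (tmul2 f g x).
Proof.
apply: lin_tlift_param => a b; apply: tlift_lin.
apply: (bilin_comp (tpure_bilin _ _)); [exact: hf.2 | exact: hg.2].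
Qed.
End Tmul2.

Section Nat.
Variable k : fieldType.
Lemma tmap_tmap (U V U' V' U'' V'' : lmodType k) (f : U' -> U'') (g : V' -> V'')
  (f' : U -> U') (g' : V -> V') x :
  lin f -> lin g -> tmap f g (tmap f' g' x) = tmap (fun a => f (f' a)) (fun b => g (g' b)) x.
Proof.
move=> hf hg; apply: tensor_ext => W F hF; rewrite !tlift_tmap //.
exact: bilin_comp.
Qed.

Lemma tmap_ext (U V U' V' : lmodType k) (f1 f2 : U -> U') (g1 g2 : V -> V') x :
  (forall a, f1 a = f2 a) -> (forall b, g1 b = g2 b) -> tmap f1 g1 x = tmap f2 g2 x.
Proof. by move=> h1 h2; apply: tlift_ext => a b; rewrite h1 h2. Qed.

Lemma tassoc_nat (U V X X' : lmodType k) (h : X -> X') (Y : tensor (tensor U V) X) :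
  lin h -> tassoc (tmap id h Y) = tmap id (tmap id h) (tassoc Y).
Proof.
move=> hh; apply: tensor_ext => W F hF.
rewrite tlift_tassoc // tlift_tmap; last exact: tassoc_G_bilin hF.
rewrite tlift_tmap //.
rewrite tlift_tassoc; last exact: bilin_comp hF (@lin_id _ _) (tmap_lin (@lin_id _ _) hh).
apply: tlift_ext => t w; apply: tlift_ext => u v.
by rewrite tmap_pure.
Qed.

Lemma tmul2_nat_r (A B C D D' E F F' : lmodType k) (f : A -> C -> E) (g : B -> D -> F)
  (g' : B -> D' -> F') (p : F -> F') (p' : D -> D') x y :
  bilin f -> lin p -> (forall d, lin (g' d)) -> (forall b d, p (g b d) = g' b (p' d)) ->
  tmap id p (tmul2 f g x y) = tmul2 f g' x (tmap id p' y).
Proof.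
move=> hf hp hg' e; apply: tensor_ext => W G hG.
rewrite tlift_tmap // !tlift_tmul2 //; last exact: bilin_comp hG (@lin_id _ _) hp.
apply: tlift_ext => a b; rewrite tlift_tmap //; last first.
  apply: bilin_comp hG _ _; [exact: hf.2 | exact: hg'].
by apply: tlift_ext => c d; rewrite e.
Qed.


Lemma tmul2_nat_l (A B B' C D E F F' : lmodType k) (f : A -> C -> E) (g : B -> D -> F)
  (g' : B' -> D -> F') (p : F -> F') (p' : B -> B') x y :
  bilin f -> lin p -> (forall d, lin (fun b => g' b d)) -> (forall b d, p (g b d) = g' (p' b) d) ->
  tmap id p (tmul2 f g x y) = tmul2 f g' (tmap id p' x) y.
Proof.
move=> hf hp hg' e; apply: tensor_ext => W G hG.
rewrite tlift_tmap // !tlift_tmul2 //; last exact: bilin_comp hG (@lin_id _ _) hp.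
rewrite tlift_tmap //; last first.
  apply: bilin_tlift_param => c d; apply: bilin_comp hG _ _; [exact: hf.1 | exact: hg'].
apply: tlift_ext => a b; apply: tlift_ext => c d; by rewrite e.
Qed.
End Nat.

Lemma ker_subspace (k : fieldType) (U W : lmodType k) (L : U -> W) : lin L -> subspace (fun w => L w = 0).
Proof.
move=> hL; split.
- exact: (lin0 hL).
- by move=> x y hx hy; rewrite (linD hL) hx hy addr0.
- by move=> a x hx; rewrite (linZ hL) hx scaler0.
Qed.

Lemma lin_sub (k : fieldType) (U W : lmodType k) (F G : U -> W) : lin F -> lin G -> lin (fun x => F x - G x).
Proof.
move=> hF hG a x y; rewrite hF hG scalerBr addrACA opprD //.
Qed.

End T.
Import T.

Module QM.
Set Implicit Arguments. Unset Strict Implicit. Unset Printing Implicit Defensive.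
Import GRing.Theory.
Local Open Scope ring_scope.
Local Open Scope quotient_scope.

Section QuotMod.
Variables (k : fieldType) (M : lmodType k) (N : M -> Prop) (hN : subspace N).

Lemma subN x : N x -> N (- x).
Proof. by move=> h; rewrite -scaleN1r; apply: (subspaceZ hN). Qed.
Lemma subB x y : N x -> N y -> N (x - y).
Proof. by move=> hx hy; apply: (subspaceD hN) => //; apply: subN. Qed.

Definition qrel (x y : M) : bool := `[< N (x - y) >].
Lemma qrel_refl : reflexive qrel.
Proof. by move=> x; apply/asboolP; rewrite subrr; apply: (subspace0 hN). Qed.
Lemma qrel_sym : symmetric qrel.
Proof.
move=> x y; apply/asboolP/asboolP => h.
  by rewrite -opprB; apply: subN.
by rewrite -opprB; apply: subN.
Qed.
Lemma qrel_trans : transitive qrel.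
Proof.
move=> y x z /asboolP h1 /asboolP h2; apply/asboolP.
have -> : x - z = (x - y) + (y - z) by rewrite addrA subrK.
exact: (subspaceD hN).
Qed.

Canonical qrel_equiv := EquivRel qrel qrel_refl qrel_sym qrel_trans.
Definition quotM := {eq_quot qrel}.
HB.instance Definition _ : EqQuotient _ qrel quotM := EqQuotient.on quotM.
HB.instance Definition _ := Choice.on quotM.

Definition qp (x : M) : quotM := \pi_quotM x.

Lemma qpE x y : qp x = qp y <-> N (x - y).
Proof.
split; first by move/eqmodP/asboolP.
by move=> h; apply/eqmodP/asboolP.
Qed.

Lemma qp_repr (a : quotM) : qp (repr a) = a.
Proof. exact: reprK. Qed.

Lemma repr_qp x : N (repr (qp x) - x).
Proof. by apply/qpE; rewrite qp_repr. Qed.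

Definition qzero : quotM := qp 0.
Definition qadd (a b : quotM) : quotM := qp (repr a + repr b).
Definition qopp (a : quotM) : quotM := qp (- repr a).
Definition qscale (c : k) (a : quotM) : quotM := qp (c *: repr a).

Lemma qaddE x y : qadd (qp x) (qp y) = qp (x + y).
Proof.
apply/qpE; have h1 := repr_qp x; have h2 := repr_qp y.
have -> : repr (qp x) + repr (qp y) - (x + y) = (repr (qp x) - x) + (repr (qp y) - y).
  by rewrite opprD addrACA.
exact: (subspaceD hN).
Qed.
Lemma qoppE x : qopp (qp x) = qp (- x).
Proof.
apply/qpE; have h1 := repr_qp x.
have -> : - repr (qp x) - - x = - (repr (qp x) - x) by rewrite opprB opprK addrC.
exact: subN.
Qed.
Lemma qscaleE c x : qscale c (qp x) = qp (c *: x).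
Proof.
apply/qpE; have h1 := repr_qp x.
rewrite -scalerBr; exact: (subspaceZ hN).
Qed.

Lemma qp_ind (P : quotM -> Prop) : (forall x, P (qp x)) -> forall a, P a.
Proof. by move=> h a; rewrite -[a]qp_repr. Qed.

Lemma qaddA : associative qadd.
Proof.
by elim/qp_ind=> x; elim/qp_ind=> y; elim/qp_ind=> z; rewrite !qaddE addrA.
Qed.
Lemma qaddC : commutative qadd.
Proof. by elim/qp_ind=> x; elim/qp_ind=> y; rewrite !qaddE addrC. Qed.
Lemma qadd0 : left_id qzero qadd.
Proof. by elim/qp_ind=> x; rewrite /qzero qaddE add0r. Qed.
Lemma qaddN : left_inverse qzero qopp qadd.
Proof. by elim/qp_ind=> x; rewrite qoppE qaddE addNr. Qed.

HB.instance Definition _ := GRing.isZmodule.Build quotM qaddA qaddC qadd0 qaddN.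
Lemma qpD x y : qp x + qp y = qp (x + y).
Proof. exact: qaddE. Qed.

Lemma qscaleA a b x : qscale a (qscale b x) = qscale (a * b) x.
Proof. by elim/qp_ind: x => x; rewrite !qscaleE scalerA. Qed.
Lemma qscale1 : left_id 1 qscale.
Proof. by elim/qp_ind=> x; rewrite qscaleE scale1r. Qed.
Lemma qscaleDr : right_distributive qscale +%R.
Proof.
move=> a; elim/qp_ind=> x; elim/qp_ind=> y.
by rewrite qpD !qscaleE qpD scalerDr.
Qed.
Lemma qscaleDl x : {morph qscale^~ x : a b / a + b}.
Proof.
move=> a b; elim/qp_ind: x => x.
by rewrite !qscaleE qpD scalerDl.
Qed.

HB.instance Definition _ := GRing.Zmodule_isLmodule.Build k quotM qscaleA qscale1 qscaleDr qscaleDl.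

Lemma qp_lin : lin qp.
Proof.
move=> a x y.
have -> : a *: qp x + qp y = qadd (qscale a (qp x)) (qp y) by [].
by rewrite qscaleE qaddE.
Qed.

Lemma qp0 x : qp x = 0 <-> N x.
Proof.
have -> : (0 : quotM) = qp 0 by rewrite -(lin0 qp_lin).
by rewrite qpE subr0.
Qed.

Definition qmap (L : M -> M) (a : quotM) : quotM := qp (L (repr a)).
Lemma qmapE (L : M -> M) : lin L -> (forall x, N x -> N (L x)) ->
  forall x, qmap L (qp x) = qp (L x).
Proof.
move=> hL hLN x; apply/qpE; rewrite -(linB hL); apply: hLN; exact: repr_qp.
Qed.

End QuotMod.

End QM.
Import QM.

Module HH.
Set Implicit Arguments. Unset Strict Implicit. Unset Printing Implicit Defensive.
Import GRing.Theory.
Set Default Proof Using "All".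
Local Open Scope ring_scope.

Section HH.
Variables (k : fieldType) (H : lmodType k) (A : HomHopfData H) (hA : isHomHopf A).
Local Notation mul := (hmul A).
Local Notation one := (hone A).
Local Notation alpha := (halpha A).
Local Notation alphai := (halphai A).
Local Notation Delta := (hDelta A).
Local Notation eps := (heps A).
Local Notation S := (hS A).

Definition sw (W : lmodType k) (h : H) (f : H -> H -> W) : W := tlift f (Delta h).

Lemma hmulDl x y b : mul (x + y) b = mul x b + mul y b.
Proof. exact: (blD (hh_mul_bilin hA)). Qed.
Lemma hmulZl a x b : mul (a *: x) b = a *: mul x b.
Proof. exact: (blZ (hh_mul_bilin hA)). Qed.
Lemma hmulDr b x y : mul b (x + y) = mul b x + mul b y.
Proof. exact: (linD ((hh_mul_bilin hA).2 b)). Qed.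
Lemma hmulZr b a x : mul b (a *: x) = a *: mul b x.
Proof. exact: (linZ ((hh_mul_bilin hA).2 b)). Qed.
Lemma hmul0l b : mul 0 b = 0.
Proof. exact: (bl0 (hh_mul_bilin hA)). Qed.
Lemma hmul0r b : mul b 0 = 0.
Proof. exact: (lin0 ((hh_mul_bilin hA).2 b)). Qed.
Lemma hmulNl x b : mul (- x) b = - mul x b.
Proof. exact: (blN (hh_mul_bilin hA)). Qed.
Lemma hmulNr b x : mul b (- x) = - mul b x.
Proof. exact: (linN ((hh_mul_bilin hA).2 b)). Qed.
Lemma hmulBl x y b : mul (x - y) b = mul x b - mul y b.
Proof. by rewrite hmulDl hmulNl. Qed.
Lemma hmulBr b x y : mul b (x - y) = mul b x - mul b y.
Proof. by rewrite hmulDr hmulNr. Qed.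

Lemma alphaD x y : alpha (x + y) = alpha x + alpha y.
Proof. exact: (linD (hh_alpha_lin hA)). Qed.
Lemma alphaZ a x : alpha (a *: x) = a *: alpha x.
Proof. exact: (linZ (hh_alpha_lin hA)). Qed.
Lemma alpha0 : alpha 0 = 0.
Proof. exact: (lin0 (hh_alpha_lin hA)). Qed.
Lemma alphaK x : alphai (alpha x) = x.
Proof. exact: (hh_alphaK hA). Qed.
Lemma alphaiK x : alpha (alphai x) = x.
Proof. exact: (hh_alphaiK hA). Qed.
Lemma alpha_inj : injective alpha.
Proof. exact: (can_inj (hh_alphaK hA)). Qed.

Lemma alphai_lin : lin alphai.
Proof.
move=> a x y; apply: alpha_inj.
by rewrite alphaiK (hh_alpha_lin hA) !alphaiK.
Qed.
Lemma alphaiD x y : alphai (x + y) = alphai x + alphai y.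
Proof. exact: (linD alphai_lin). Qed.
Lemma alphaiZ a x : alphai (a *: x) = a *: alphai x.
Proof. exact: (linZ alphai_lin). Qed.
Lemma alphai0 : alphai 0 = 0.
Proof. exact: (lin0 alphai_lin). Qed.

Lemma alpha_one : alpha one = one.
Proof. exact: (hh_alpha_one hA). Qed.
Lemma alphai_one : alphai one = one.
Proof. by rewrite -{1}alpha_one alphaK. Qed.
Lemma alpha_mul a b : alpha (mul a b) = mul (alpha a) (alpha b).
Proof. exact: (hh_alpha_mul hA). Qed.
Lemma alphai_mul a b : alphai (mul a b) = mul (alphai a) (alphai b).
Proof. by apply: alpha_inj; rewrite alphaiK alpha_mul !alphaiK. Qed.
Lemma hmul1l a : mul one a = alpha a.
Proof. exact: (hh_one_mul hA). Qed.
Lemma hmul1r a : mul a one = alpha a.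
Proof. exact: (hh_mul_one hA). Qed.
Lemma massoc a b c : mul (alpha a) (mul b c) = mul (mul a b) (alpha c).
Proof. exact: (hh_mul_assoc hA). Qed.

Lemma epsD x y : eps (x + y) = eps x + eps y.
Proof. exact: linearD. Qed.
Lemma epsZ a x : eps (a *: x) = a * eps x.
Proof. exact: linearZ. Qed.
Lemma eps0 : eps 0 = 0.
Proof. exact: linear0. Qed.
Lemma epsN x : eps (- x) = - eps x.
Proof. exact: linearN. Qed.
Lemma epsB x y : eps (x - y) = eps x - eps y.
Proof. exact: linearB. Qed.
Lemma eps_one : eps one = 1.
Proof. exact: (hh_eps_one hA). Qed.
Lemma eps_alpha h : eps (alpha h) = eps h.
Proof. exact: (hh_eps_alpha hA). Qed.
Lemma eps_alphai h : eps (alphai h) = eps h.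
Proof. by rewrite -{2}(alphaiK h) eps_alpha. Qed.
Lemma heps_mul a b : eps (mul a b) = eps a * eps b.
Proof. exact: (hh_eps_mul hA). Qed.
Lemma eps_lin : lin (fun x : H => (eps x : k^o)).
Proof. by move=> a x y /=; rewrite epsD epsZ. Qed.

Lemma S_lin : lin S.
Proof. exact: (hh_S_lin hA). Qed.
Lemma SD x y : S (x + y) = S x + S y.
Proof. exact: (linD S_lin). Qed.
Lemma SZ a x : S (a *: x) = a *: S x.
Proof. exact: (linZ S_lin). Qed.
Lemma S0 : S 0 = 0.
Proof. exact: (lin0 S_lin). Qed.
Lemma S_alpha h : S (alpha h) = alpha (S h).
Proof. exact: (hh_S_alpha hA). Qed.
Lemma S_alphai h : S (alphai h) = alphai (S h).
Proof. by apply: alpha_inj; rewrite -S_alpha !alphaiK. Qed.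

Lemma alpha_lin : lin alpha.
Proof. exact: (hh_alpha_lin hA). Qed.
Lemma mul_bilin : bilin mul.
Proof. exact: (hh_mul_bilin hA). Qed.

Lemma sw_ext (W : lmodType k) h (f g : H -> H -> W) :
  (forall a b, f a b = g a b) -> sw h f = sw h g.
Proof. exact: tlift_ext. Qed.

Lemma lin_sw (W W' : lmodType k) (L : W -> W') h (f : H -> H -> W) :
  lin L -> L (sw h f) = sw h (fun a b => L (f a b)).
Proof. exact: lin_tlift. Qed.

Section SwBil.
Variables (W : lmodType k) (f : H -> H -> W) (hf : bilin f).
Lemma swD x y : sw (x + y) f = sw x f + sw y f.
Proof. by rewrite /sw (linD (hh_Delta_lin hA)) tliftD. Qed.
Lemma swZ a x : sw (a *: x) f = a *: sw x f.
Proof. by rewrite /sw (linZ (hh_Delta_lin hA)) tliftZ. Qed.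
Lemma sw0 : sw 0 f = 0.
Proof. by rewrite /sw (lin0 (hh_Delta_lin hA)) tlift0. Qed.
Lemma sw_lin : lin (fun h => sw h f).
Proof. by move=> a x y; rewrite swD swZ. Qed.
Lemma sw_alpha h : sw (alpha h) f = sw h (fun a b => f (alpha a) (alpha b)).
Proof. by rewrite /sw (hh_Delta_alpha hA) tlift_tmap. Qed.
Lemma sw_mul a b :
  sw (mul a b) f = sw a (fun a1 a2 => sw b (fun b1 b2 => f (mul a1 b1) (mul a2 b2))).
Proof. by rewrite /sw (hh_Delta_mul hA) tlift_tmul2. Qed.
Lemma sw_one : sw one f = f one one.
Proof. by rewrite /sw (hh_Delta_one hA) tlift_pure. Qed.
End SwBil.

Lemma Delta_alphai h : Delta (alphai h) = tmap alphai alphai (Delta h).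
Proof.
rewrite -{2}(alphaiK h) (hh_Delta_alpha hA) {2}/tmap (lin_tlift _ _ (tmap_lin alphai_lin alphai_lin)).
rewrite [LHS]tensor_sum; apply: eq_bigr => p _.
by rewrite tmap_pure ?alphaK //; apply: alphai_lin.
Qed.

Lemma sw_alphai (W : lmodType k) (f : H -> H -> W) h : bilin f ->
  sw (alphai h) f = sw h (fun a b => f (alphai a) (alphai b)).
Proof. by move=> hf; rewrite /sw Delta_alphai tlift_tmap. Qed.

Lemma counitl h : sw h (fun a b => eps a *: b) = alphai h.
Proof. exact: (hh_counitl hA). Qed.
Lemma counitr h : sw h (fun a b => eps b *: a) = alphai h.
Proof. exact: (hh_counitr hA). Qed.
Lemma counitlL (W : lmodType k) (L : H -> W) h :
  lin L -> sw h (fun a b => eps a *: L b) = L (alphai h).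
Proof.
move=> hL; rewrite -counitl (lin_sw _ _ hL); apply: sw_ext => a b.
by rewrite (linZ hL).
Qed.
Lemma counitrL (W : lmodType k) (L : H -> W) h :
  lin L -> sw h (fun a b => eps b *: L a) = L (alphai h).
Proof.
move=> hL; rewrite -counitr (lin_sw _ _ hL); apply: sw_ext => a b.
by rewrite (linZ hL).
Qed.
Lemma antipode_l h : sw h (fun a b => mul (S a) b) = eps h *: one.
Proof. exact: (hh_S_l hA). Qed.
Lemma antipode_r h : sw h (fun a b => mul a (S b)) = eps h *: one.
Proof. exact: (hh_S_r hA). Qed.

Lemma coassoc (W : lmodType k) (F : H -> H -> H -> W) h : trilin F ->
  sw h (fun a b => sw b (fun b1 b2 => F (alphai a) b1 b2)) =
  sw h (fun a b => sw a (fun a1 a2 => F a1 a2 (alphai b))).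
Proof.
move=> hF; have hG := bilin_tlift2 hF.
have := congr1 (tlift (fun a t => tlift (F a) t)) (hh_coassoc hA h).
rewrite tlift_tmap // => E; rewrite /sw; etransitivity; first exact: E.
rewrite /tmap (lin_tlift _ _ (@tassoc_lin _ _ _ _)) tlift_tlift //; apply: tlift_ext => a b.
rewrite tassoc_pure tlift_tlift //; apply: tlift_ext => u v.
rewrite tlift_pure //; rewrite tlift_pure //.
by case: hF => _ h2 h3; split=> [?|?]; [apply: h2 | apply: h3].
Qed.


Lemma sw_exchange (W : lmodType k) (a b : H) (F : H -> H -> H -> H -> W) :
  sw a (fun x y => sw b (F x y)) = sw b (fun u v => sw a (fun x y => F x y u v)).
Proof. exact: tlift_exchange. Qed.

Lemma bilin_sw_param (U V W : lmodType k) (x : H) (K : U -> V -> H -> H -> W) :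
  (forall c d, bilin (fun a b => K a b c d)) -> bilin (fun a b => sw x (K a b)).
Proof. exact: bilin_tlift_param. Qed.
Lemma lin_sw_param (U W : lmodType k) (x : H) (K : U -> H -> H -> W) :
  (forall c d, lin (fun a => K a c d)) -> lin (fun a => sw x (K a)).
Proof. exact: lin_tlift_param. Qed.

Lemma sw_add (W : lmodType k) h (f g : H -> H -> W) :
  sw h (fun a b => f a b + g a b) = sw h f + sw h g.
Proof. by rewrite /sw /tlift /tsum -big_split. Qed.
Lemma sw_sub (W : lmodType k) h (f g : H -> H -> W) :
  sw h (fun a b => f a b - g a b) = sw h f - sw h g.
Proof. by rewrite /sw /tlift /tsum -sumrB. Qed.
Lemma sw_scale (W : lmodType k) h (f : H -> H -> W) c :
  sw h (fun a b => c *: f a b) = c *: sw h f.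
Proof. by rewrite /sw /tlift /tsum scaler_sumr. Qed.

Lemma sw_zero (W : lmodType k) h (f : H -> H -> W) : (forall a b, f a b = 0) -> sw h f = 0.
Proof. by move=> e; rewrite /sw /tlift /tsum big1 // => p _; rewrite e. Qed.

End HH.

End HH.
Import HH.

Module Om.
Set Implicit Arguments. Unset Strict Implicit. Unset Printing Implicit Defensive.
Import GRing.Theory.
Set Default Proof Using "All".
Set Maximal Implicit Insertion.
Existing Class isHomHopf.
Local Open Scope ring_scope.

Section Om.
Variables (k : fieldType) (H : lmodType k) (A : HomHopfData H).
Context {hA : isHomHopf A}.
Local Notation mul := (hmul A).
Local Notation one := (hone A).
Local Notation alpha := (halpha A).
Local Notation alphai := (halphai A).
Local Notation Delta := (hDelta A).
Local Notation eps := (heps A).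
Local Notation S := (hS A).
Local Notation Om := (Omega1 A).
Local Notation KE := (kerEps A).
Local Notation bar := (bar A).
Local Notation omU := (omU A).
Local Notation sw := (sw A).

Lemma eps_keval (x : KE) : eps (keval x) = 0.
Proof. by case: x => x /= /eqP. Qed.

Lemma kev_inj : injective (@keval k H A).
Proof. exact: val_inj. Qed.

Lemma kev_bar h : keval (bar h) = h - eps h *: one.
Proof.
by rewrite /Defs.bar insubdK // inE (epsB hA) (epsZ hA) (eps_one hA) mulr1 subrr.
Qed.

Lemma bar_lin : lin bar.
Proof.
move=> a x y; apply: kev_inj.
have -> : keval (a *: bar x + bar y) = a *: keval (bar x) + keval (bar y) by [].
rewrite !kev_bar (epsD hA) (epsZ hA) scalerDl -scalerA.
by rewrite scalerBr addrACA opprD.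
Qed.
Lemma barD x y : bar (x + y) = bar x + bar y.
Proof. exact: (linD bar_lin). Qed.
Lemma barZ a x : bar (a *: x) = a *: bar x.
Proof. exact: (linZ bar_lin). Qed.

Lemma bar_ker (x : KE) : bar (keval x) = x.
Proof. by apply: kev_inj => /=; rewrite kev_bar eps_keval scale0r subr0. Qed.
Lemma bar_eps0 h : eps h = 0 -> keval (bar h) = h.
Proof. by move=> e; rewrite kev_bar e scale0r subr0. Qed.
Lemma bar_one : bar one = 0.
Proof. by apply: kev_inj => /=; rewrite kev_bar (eps_one hA) scale1r subrr. Qed.

Lemma omU_bilin : bilin omU.
Proof.
apply: bilinP => *; rewrite /Defs.omU ?tpureD1 ?tpureZ1 //.
  by rewrite barD tpureD2.
by rewrite barZ tpureZ2.
Qed.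
Lemma omUD1 x y h : omU (x + y) h = omU x h + omU y h.
Proof. exact: (blD omU_bilin). Qed.
Lemma omUZ1 a x h : omU (a *: x) h = a *: omU x h.
Proof. exact: (blZ omU_bilin). Qed.
Lemma omUD2 g x y : omU g (x + y) = omU g x + omU g y.
Proof. exact: (linD (omU_bilin.2 g)). Qed.
Lemma omUZ2 g a x : omU g (a *: x) = a *: omU g x.
Proof. exact: (linZ (omU_bilin.2 g)). Qed.
Lemma omUN1 x h : omU (- x) h = - omU x h.
Proof. exact: (blN omU_bilin). Qed.
Lemma omUN2 g x : omU g (- x) = - omU g x.
Proof. exact: (linN (omU_bilin.2 g)). Qed.
Lemma omUB2 g x y : omU g (x - y) = omU g x - omU g y.
Proof. by rewrite omUD2 omUN2. Qed.
Lemma omUB1 x y h : omU (x - y) h = omU x h - omU y h.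
Proof. by rewrite omUD1 omUN1. Qed.
Lemma omU_one g : omU g one = 0.
Proof. by rewrite /Defs.omU bar_one (lin0 ((tpure_bilin _ _).2 g)). Qed.
Lemma omU_ker g (x : KE) : omU g (keval x) = tpure g x.
Proof. by rewrite /Defs.omU bar_ker. Qed.
Lemma omU_bar g h : omU g (keval (bar h)) = omU g h.
Proof. by rewrite omU_ker. Qed.
Lemma omU01 h : omU 0 h = 0.
Proof. exact: (bl0 omU_bilin). Qed.
Lemma omU02 g : omU g 0 = 0.
Proof. exact: (lin0 (omU_bilin.2 g)). Qed.

Lemma Omega_ext (W : lmodType k) (F G : Om -> W) : lin F -> lin G ->
  (forall g h, eps h = 0 -> F (omU g h) = G (omU g h)) -> forall w, F w = G w.
Proof.
move=> hF hG h; apply: tensor_lin_ext => // u v.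
by rewrite -!omU_ker; apply: h; apply: eps_keval.
Qed.

Lemma Omega_sum (w : Om) : w = \sum_(p <- repr w) omU p.1 (keval p.2).
Proof. by rewrite {1}(tensor_sum w); apply: eq_bigr => p _; rewrite omU_ker. Qed.

Lemma lactU_fun_bilin c : bilin (fun g (x : KE) => omU (mul (alphai c) g) (alpha (keval x))).
Proof.
apply: bilinP => *; rewrite ?(hmulDr hA) ?(hmulZr hA) ?omUD1 ?omUZ1 //=.
  by rewrite (alphaD hA) omUD2.
by rewrite (alphaZ hA) omUZ2.
Qed.
Lemma lactU_omU c g h : lactU A c (omU g h) = omU (mul (alphai c) g) (alpha h).
Proof.
rewrite {1}/Defs.omU /lactU tlift_pure; last exact: lactU_fun_bilin.
by rewrite kev_bar (alphaD hA) (linN (alpha_lin hA)) omUD2 (alphaZ hA) (alpha_one hA) omUN2 omUZ2 omU_one scaler0 subr0.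
Qed.

Lemma sw_split (W : lmodType k) h (f g g' : H -> H -> W) :
  (forall a b, f a b = g a b + g' a b) -> sw h f = sw h g + sw h g'.
Proof. by move=> e; rewrite /HH.sw /tlift /tsum -big_split; apply: eq_bigr => p _. Qed.
Lemma sw_scal (W : lmodType k) h (f g : H -> H -> W) c :
  (forall a b, f a b = c *: g a b) -> sw h f = c *: sw h g.
Proof. by move=> e; rewrite /HH.sw /tlift /tsum scaler_sumr; apply: eq_bigr => p _. Qed.
Lemma sw_opp (W : lmodType k) h (f g : H -> H -> W) :
  (forall a b, f a b = - g a b) -> sw h f = - sw h g.
Proof. by move=> e; rewrite /HH.sw /tlift /tsum -sumrN; apply: eq_bigr => p _. Qed.

Lemma omU_comp_bilin (L1 L2 : H -> H) : lin L1 -> lin L2 -> bilin (fun a b => omU (L1 a) (L2 b)).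
Proof.
move=> h1 h2; apply: bilinP => *.
- by rewrite (linD h1) omUD1.
- by rewrite (linZ h1) omUZ1.
- by rewrite (linD h2) omUD2.
- by rewrite (linZ h2) omUZ2.
Qed.
Lemma mull_lin g : lin (mul g).
Proof. exact: ((mul_bilin hA).2 g). Qed.
Lemma mulr_lin g : lin (fun a => mul a g).
Proof. exact: ((mul_bilin hA).1 g). Qed.
Lemma alphai_lin' : lin alphai.
Proof. exact: (alphai_lin hA). Qed.
Lemma alpha_lin' : lin alpha.
Proof. exact: (alpha_lin hA). Qed.

Lemma lactU_lin c : lin (lactU A c).
Proof. exact: tlift_lin (lactU_fun_bilin c). Qed.

Lemma lactU_linc w : lin (fun c => lactU A c w).
Proof.
move=> a c c'; rewrite /lactU /tlift /tsum scaler_sumr -big_split /=; apply: eq_bigr => p _.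
by rewrite (alphaiD hA) (alphaiZ hA) (hmulDl hA) (hmulZl hA) omUD1 omUZ1.
Qed.

Lemma ractU_fun_bilin f :
  bilin (fun g (x : KE) => sw f (fun a b => omU (mul g a) (mul (keval x) b))).
Proof.
apply: bilinP => *.
- by apply: sw_split => *; rewrite (hmulDl hA) omUD1.
- by apply: sw_scal => *; rewrite (hmulZl hA) omUZ1.
- by apply: sw_split => *; rewrite /= (hmulDl hA) omUD2.
- by apply: sw_scal => *; rewrite /= (hmulZl hA) omUZ2.
Qed.
Lemma ractU_lin f : lin (fun w => ractU A w f).
Proof. exact: tlift_lin (ractU_fun_bilin f). Qed.

Lemma ractU_omU g h f : eps h = 0 ->
  ractU A (omU g h) f = sw f (fun a b => omU (mul g a) (mul h b)).
Proof.
move=> e; rewrite {1}/Defs.omU /ractU tlift_pure; last exact: ractU_fun_bilin.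
by rewrite bar_eps0.
Qed.

Lemma ractU_linf w : lin (ractU A w).
Proof.
have E : forall f, ractU A w f =
  tlift (fun g (x : KE) => sw f (fun a b => omU (mul g a) (mul (keval x) b))) w by [].
move=> c f f'; rewrite !E /tlift /tsum scaler_sumr -big_split /=; apply: eq_bigr => p _.
have hb : bilin (fun a b => omU (mul p.1 a) (mul (keval p.2) b)).
  by apply: omU_comp_bilin; apply: mull_lin.
by rewrite (swD hA hb) (swZ hA hb).
Qed.

Lemma betaU_fun_lin : lin (fun x : KE => bar (alpha (keval x))).
Proof.
move=> a x y; have -> : keval (a *: x + y) = a *: keval x + keval y by [].
by rewrite (alphaD hA) (alphaZ hA) barD barZ.
Qed.
Lemma betaiU_fun_lin : lin (fun x : KE => bar (alphai (keval x))).
Proof.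
move=> a x y; have -> : keval (a *: x + y) = a *: keval x + keval y by [].
by rewrite (alphaiD hA) (alphaiZ hA) barD barZ.
Qed.

Definition betaiU (w : Om) : Om := tmap alphai (fun x : KE => bar (alphai (keval x))) w.

Lemma betaU_lin : lin (betaU A).
Proof. exact: tmap_lin alpha_lin' betaU_fun_lin. Qed.
Lemma betaiU_lin : lin betaiU.
Proof. exact: tmap_lin alphai_lin' betaiU_fun_lin. Qed.

Lemma betaU_omU g h : betaU A (omU g h) = omU (alpha g) (alpha h).
Proof.
rewrite /betaU {1}/Defs.omU tmap_pure; [|exact: alpha_lin'|exact: betaU_fun_lin].
rewrite -/(omU _ _) kev_bar (linB alpha_lin') (alphaZ hA) (alpha_one hA) omUB2 omUZ2.
by rewrite omU_one scaler0 subr0.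
Qed.
Lemma betaiU_omU g h : betaiU (omU g h) = omU (alphai g) (alphai h).
Proof.
rewrite /betaiU {1}/Defs.omU tmap_pure; [|exact: alphai_lin'|exact: betaiU_fun_lin].
rewrite -/(omU _ _) kev_bar (linB alphai_lin') (alphaiZ hA) (alphai_one hA) omUB2 omUZ2.
by rewrite omU_one scaler0 subr0.
Qed.

Lemma dUE h : dU A h = sw h omU.
Proof. by []. Qed.

Lemma dU_lin : lin (dU A).
Proof. move=> c x y; rewrite !dUE (swD hA omU_bilin) (swZ hA omU_bilin) //. Qed.

Local Notation lactU := (lactU A).
Local Notation ractU := (ractU A).
Local Notation betaU := (betaU A).
Local Notation dU := (dU A).

Lemma omU_sw_bilin (L1 L2 : H -> H) g h :
  lin L1 -> lin L2 -> bilin (fun a b => omU (L1 (mul g a)) (L2 (mul h b))).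
Proof.
move=> h1 h2; apply: omU_comp_bilin; apply: lin_comp => //; apply: mull_lin.
Qed.

Lemma betaU_K w : betaiU (betaU w) = w.
Proof.
move: w; apply: (Omega_ext (lin_comp betaiU_lin betaU_lin) (@lin_id _ _)) => g h _.
by rewrite betaU_omU betaiU_omU !(alphaK hA).
Qed.
Lemma betaiU_K w : betaU (betaiU w) = w.
Proof.
move: w; apply: (Omega_ext (lin_comp betaU_lin betaiU_lin) (@lin_id _ _)) => g h _.
by rewrite betaiU_omU betaU_omU !(alphaiK hA).
Qed.

Lemma lactU_mor a m : betaU (lactU a m) = lactU (alpha a) (betaU m).
Proof.
move: m; apply: (Omega_ext (lin_comp betaU_lin (lactU_lin a)) (lin_comp (lactU_lin _) betaU_lin)) => g h _.
by rewrite lactU_omU !betaU_omU lactU_omU (alpha_mul hA) (alphaiK hA) (alphaK hA).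
Qed.

Lemma eps_mul0 h b : eps h = 0 -> eps (mul h b) = 0.
Proof. by move=> e; rewrite (HH.heps_mul hA) e mul0r. Qed.

Lemma ractU_mor m a : betaU (ractU m a) = ractU (betaU m) (alpha a).
Proof.
move: m; apply: (Omega_ext (lin_comp betaU_lin (ractU_lin a)) (lin_comp (ractU_lin _) betaU_lin)) => g h e.
rewrite ractU_omU // (lin_sw hA _ _ betaU_lin) betaU_omU ractU_omU ?(eps_alpha hA) //.
rewrite (sw_alpha hA); last by apply: (omU_sw_bilin _ _ (@lin_id _ _) (@lin_id _ _)).
by apply: (sw_ext hA) => p q; rewrite betaU_omU !(alpha_mul hA).
Qed.

Lemma lassocU a b m : lactU (alpha a) (lactU b m) = lactU (mul a b) (betaU m).
Proof.
move: m; apply: (Omega_ext (lin_comp (lactU_lin _) (lactU_lin b)) (lin_comp (lactU_lin _) betaU_lin)) => g h _.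
rewrite !lactU_omU betaU_omU lactU_omU (alphaK hA) (alphai_mul hA).
by rewrite -(massoc hA) (alphaiK hA).
Qed.

Lemma lunitU m : lactU one m = betaU m.
Proof.
move: m; apply: (Omega_ext (lactU_lin _) betaU_lin) => g h _.
by rewrite lactU_omU betaU_omU (alphai_one hA) (hmul1l hA).
Qed.

Lemma rassocU m a b : ractU (ractU m a) (alpha b) = ractU (betaU m) (mul a b).
Proof.
move: m; apply: (Omega_ext (lin_comp (ractU_lin _) (ractU_lin a)) (lin_comp (ractU_lin _) betaU_lin)) => g h e.
rewrite ractU_omU // (lin_sw hA _ _ (ractU_lin _)) betaU_omU ractU_omU ?(eps_alpha hA) //.
rewrite (sw_mul hA); last by apply: (omU_sw_bilin _ _ (@lin_id _ _) (@lin_id _ _)).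
apply: (sw_ext hA) => p q; rewrite ractU_omU; last exact: (eps_mul0 _ e).
rewrite (sw_alpha hA); last by apply: (omU_sw_bilin _ _ (@lin_id _ _) (@lin_id _ _)).
by apply: (sw_ext hA) => r t; rewrite !(massoc hA).
Qed.

Lemma runitU m : ractU m one = betaU m.
Proof.
move: m; apply: (Omega_ext (ractU_lin _) betaU_lin) => g h e.
rewrite ractU_omU // (sw_one hA); last by apply: (omU_sw_bilin _ _ (@lin_id _ _) (@lin_id _ _)).
by rewrite betaU_omU !(hmul1r hA).
Qed.

Lemma bimodU a m b : lactU (alpha a) (ractU m b) = ractU (lactU a m) (alpha b).
Proof.
move: m; apply: (Omega_ext (lin_comp (lactU_lin _) (ractU_lin b)) (lin_comp (ractU_lin _) (lactU_lin a))) => g h e.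
rewrite ractU_omU // (lin_sw hA _ _ (lactU_lin _)) lactU_omU ractU_omU ?(eps_alpha hA) //.
rewrite (sw_alpha hA); last by apply: (omU_sw_bilin _ _ (@lin_id _ _) (@lin_id _ _)).
apply: (sw_ext hA) => p q; rewrite lactU_omU (alphaK hA) (alpha_mul hA).
by rewrite -(massoc hA) (alphaiK hA).
Qed.

Lemma lactU_bilin : bilin lactU.
Proof. by split=> [w|c]; [apply: lactU_linc | apply: lactU_lin]. Qed.
Lemma ractU_bilin : bilin ractU.
Proof. by split=> [f|w]; [apply: ractU_lin | apply: ractU_linf]. Qed.

Lemma OmBimod : isHomBimodule A betaU betaiU lactU ractU.
Proof.
split.
- exact: betaU_lin.
- exact: betaU_K.
- exact: betaiU_K.
- exact: lactU_bilin.
- exact: ractU_bilin.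
- exact: lactU_mor.
- exact: ractU_mor.
- exact: lassocU.
- exact: lunitU.
- exact: rassocU.
- exact: runitU.
- exact: bimodU.
Qed.

End Om.

End Om.
Import Om.

Module Om2.
Set Implicit Arguments. Unset Strict Implicit. Unset Printing Implicit Defensive.
Import GRing.Theory.
Set Default Proof Using "All".
Set Maximal Implicit Insertion.
Local Open Scope ring_scope.

Section Om2.
Variables (k : fieldType) (H : lmodType k) (A : HomHopfData H).
Context {hA : isHomHopf A}.
Local Notation mul := (hmul A).
Local Notation one := (hone A).
Local Notation alpha := (halpha A).
Local Notation alphai := (halphai A).
Local Notation Delta := (hDelta A).
Local Notation eps := (heps A).
Local Notation S := (hS A).
Local Notation Om := (Omega1 A).
Local Notation KE := (kerEps A).
Local Notation bar := (bar A).
Local Notation omU := (omU A).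
Local Notation sw := (sw A).
Local Notation lactU := (lactU A).
Local Notation ractU := (ractU A).
Local Notation betaU := (betaU A).
Local Notation dU := (dU A).

Lemma omUl_lin y : lin (fun x => omU x y).
Proof. exact: ((omU_bilin (A:=A)).1 y). Qed.
Lemma omUr_lin x : lin (omU x).
Proof. exact: ((omU_bilin (A:=A)).2 x). Qed.

Lemma ractU_omU_gen g h f : ractU (omU g h) f =
  sw f (fun a b => omU (mul g a) (mul h b)) - eps h *: sw f (fun a b => omU (mul g a) (alpha b)).
Proof.
rewrite -omU_bar ractU_omU //; last exact: eps_keval.
rewrite kev_bar -(sw_scale hA) -(sw_sub hA); apply: (sw_ext hA) => a b.
by rewrite (hmulBl hA) (hmulZl hA) (hmul1l hA) omUB2 omUZ2.
Qed.

Lemma leibnizU h g : dU (mul h g) = lactU h (dU g) + ractU (dU h) g.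
Proof.
rewrite !dUE (sw_mul hA (omU_bilin (A:=A))) (lin_sw hA _ _ (lactU_lin h)) (lin_sw hA _ _ (ractU_lin g)).
rewrite (sw_ext hA h (fun a b => ractU_omU_gen a b g)) (sw_sub hA).
have hL : lin (fun a => sw g (fun c d => omU (mul a c) (alpha d))).
  apply: (@lin_sw_param _ _ _ hA _ _ g (fun a c d => omU (mul a c) (alpha d))) => c d.
  exact: (lin_comp (omUl_lin _) (mulr_lin _)).
rewrite (counitrL hA _ hL).
have -> : sw g (fun c d => omU (mul (alphai h) c) (alpha d)) = sw g (fun a b => lactU h (omU a b)).
  by apply: (sw_ext hA) => a b; rewrite lactU_omU.
by rewrite addrC subrK.
Qed.

Lemma dU_alpha h : dU (alpha h) = betaU (dU h).
Proof.
rewrite !dUE (sw_alpha hA (omU_bilin (A:=A))) (lin_sw hA _ _ betaU_lin).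
by apply: (sw_ext hA) => a b; rewrite betaU_omU.
Qed.

Lemma omegaU h : omegaG A lactU dU h = omU one (alphai h).
Proof.
rewrite /omegaG; change (sw h (fun a b => lactU (S a) (dU b)) = omU one (alphai h)).
pose F a c d := omU (mul (S a) c) (alpha d).
have hF : trilin F.
  split=> [c d|a d|a c]; rewrite /F.
  - exact: (lin_comp (omUl_lin _) (lin_comp (mulr_lin _) (S_lin hA))).
  - exact: (lin_comp (omUl_lin _) (mull_lin _)).
  - exact: (lin_comp (omUr_lin _) alpha_lin').
have E : forall a b, lactU (S a) (dU b) = sw b (fun c d => F (alphai a) c d).
  move=> a b; rewrite dUE (lin_sw hA _ _ (lactU_lin _)); apply: (sw_ext hA) => c d.
  by rewrite lactU_omU /F (S_alphai hA).
rewrite (sw_ext hA h E) (coassoc hA h hF) /F.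
rewrite -(counitlL hA _ (omUr_lin one)); apply: (sw_ext hA) => a b.
rewrite (alphaiK hA) -(lin_sw hA _ _ (omUl_lin b)) (antipode_l hA).
by rewrite omUZ1.
Qed.

Lemma omU_lact g h : omU g h = lactU g (omU one (alphai h)).
Proof. by rewrite lactU_omU (hmul1r hA) !(alphaiK hA). Qed.

Lemma inspan_mono (V : lmodType k) (P Q : V -> Prop) x :
  (forall y, P y -> inspan Q y) -> inspan P x -> inspan Q x.
Proof.
move=> h; apply: inspan_ind => //; exact: inspan_subspace.
Qed.

Lemma sw_inspan (V : lmodType k) (P : V -> Prop) h (F : H -> H -> V) :
  (forall a b, inspan P (F a b)) -> inspan P (sw h F).
Proof. by move=> hF; apply: inspan_sum => p; apply: hF. Qed.

Lemma spanU1 w : inspan (fun x => exists a b, x = lactU a (dU b)) w.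
Proof.
rewrite (Omega_sum w); apply: inspan_sum => p.
rewrite omU_lact -omegaU /omegaG -/(sw (keval p.2) _).
rewrite (lin_sw hA _ _ (lactU_lin _)); apply: sw_inspan => a b.
apply: inspan_gen; exists (mul (alphai p.1) (S a)), (alpha b).
by rewrite -{1}(alphaiK hA p.1) lassocU dU_alpha.
Qed.

Lemma lact_dU_ract a b : lactU a (dU b) = ractU (lactU (alphai a) (dU (alphai b))) one.
Proof. by rewrite runitU lactU_mor (alphaiK hA) -dU_alpha (alphaiK hA). Qed.

Lemma spanU w : inspan (fun x => exists h g f, x = ractU (lactU h (dU g)) f) w.
Proof.
apply: inspan_mono (spanU1 w) => y [a [b ->]]; apply: inspan_gen.
by exists (alphai a), (alphai b), one; rewrite lact_dU_ract.
Qed.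

Lemma OmFODC : isHomFODC A betaU (@betaiU _ _ A) lactU ractU dU.
Proof.
split.
- exact: OmBimod.
- exact: dU_lin.
- exact: leibnizU.
- exact: dU_alpha.
- exact: spanU.
Qed.

End Om2.

End Om2.
Import Om2.

Module Cov.
Set Implicit Arguments. Unset Strict Implicit. Unset Printing Implicit Defensive.
Import GRing.Theory.
Set Default Proof Using "All".
Set Maximal Implicit Insertion.
Local Open Scope ring_scope.

Section Cov.
Variables (k : fieldType) (H : lmodType k) (A : HomHopfData H).
Context {hA : isHomHopf A}.
Local Notation mul := (hmul A).
Local Notation one := (hone A).
Local Notation alpha := (halpha A).
Local Notation alphai := (halphai A).
Local Notation Delta := (hDelta A).
Local Notation eps := (heps A).
Local Notation S := (hS A).
Local Notation Om := (Omega1 A).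
Local Notation KE := (kerEps A).
Local Notation bar := (bar A).
Local Notation omU := (omU A).
Local Notation sw := (sw A).
Local Notation lactU := (lactU A).
Local Notation ractU := (ractU A).
Local Notation betaU := (betaU A).
Local Notation dU := (dU A).

Definition phiU (w : Om) : tensor H Om :=
  tlift (fun g (x : KE) => sw g (fun a b => tpure (alpha a) (omU b (alphai (keval x))))) w.

Lemma tpure_omU_bilin (L : H -> H) y : lin L ->
  bilin (fun a b => tpure (L a) (omU b y) : tensor H Om).
Proof.
move=> hL; apply: (bilin_comp (tpure_bilin _ _)) => //; exact: omUl_lin.
Qed.

Lemma phiU_fun_bilin :
  bilin (fun g (x : KE) => sw g (fun a b => tpure (alpha a) (omU b (alphai (keval x))) : tensor H Om)).
Proof.
split=> [x|g].
  apply: (sw_lin hA); apply: tpure_omU_bilin; exact: alpha_lin'.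
apply: (@lin_sw_param _ _ _ hA _ _ g (fun (x : KE) a b => tpure (alpha a) (omU b (alphai (keval x))) : tensor H Om)) => a b.
move=> c x y; have -> : keval (c *: x + y) = c *: keval x + keval y by [].
by rewrite (alphaiD hA) (alphaiZ hA) omUD2 omUZ2 tpureD2 tpureZ2.
Qed.

Lemma phiU_lin : lin phiU.
Proof. exact: tlift_lin phiU_fun_bilin. Qed.

Lemma phiU_omU g h : phiU (omU g h) = sw g (fun a b => tpure (alpha a) (omU b (alphai h))).
Proof.
rewrite {1}/Defs.omU /phiU tlift_pure; last exact: phiU_fun_bilin.
apply: (sw_ext hA) => a b; congr tpure.
by rewrite kev_bar (linB alphai_lin') (alphaiZ hA) (alphai_one hA) omUB2 omUZ2 omU_one scaler0 subr0.
Qed.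

Lemma phiU_coassoc m : tmap alphai phiU (phiU m) = tassoc (tmap Delta betaiU (phiU m)).
Proof.
move: m; apply: Omega_ext.
- exact: (lin_comp (tmap_lin alphai_lin' phiU_lin) phiU_lin).
- exact: (lin_comp (@tassoc_lin _ _ _ _) (lin_comp (tmap_lin (hh_Delta_lin hA) betaiU_lin) phiU_lin)).
move=> g h _; apply: tensor_ext => W F hF.
have hF1 : bilin (fun a t => F (alphai a) (phiU t)) by apply: bilin_comp => //; [exact: alphai_lin' | exact: phiU_lin].
rewrite tlift_tmap // phiU_omU /HH.sw tlift_tlift //.
have hG := tassoc_G_bilin hF.
have hG' : bilin (fun a w => tlift (fun u v => F u (tpure v (betaiU w))) (Delta a)).
  exact: (bilin_comp hG (hh_Delta_lin hA) betaiU_lin).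
rewrite tlift_tassoc // tlift_tmap // tlift_tlift //.
rewrite -!/(HH.sw _ _ _).
pose T x y z := F (alpha x) (tpure (alpha y) (omU z (alphai (alphai h)))).
have hT : trilin T.
  split=> [y z|x z|x y]; rewrite /T.
  - exact: (lin_comp (hF.1 _) alpha_lin').
  - exact: (lin_comp (hF.2 _) (lin_comp ((tpure_bilin _ _).1 _) alpha_lin')).
  - exact: (lin_comp (hF.2 _) (lin_comp ((tpure_bilin _ _).2 _) (omUl_lin _))).
transitivity (sw g (fun a b => sw b (fun c d => T (alphai a) c d))).
  apply: (sw_ext hA) => a b; rewrite tlift_pure //.
  rewrite (alphaK hA) phiU_omU (lin_sw hA _ _ (hF.2 _)); apply: (sw_ext hA) => c d.
  by rewrite /T (alphaiK hA).
rewrite (coassoc hA g hT); apply: (sw_ext hA) => a b.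
rewrite tlift_pure //.
rewrite betaiU_omU /HH.sw (hh_Delta_alpha hA) tlift_tmap //.
all: try (apply: bilin_comp => //; exact: (tpure_bilin _ _).1).
Qed.

Lemma epsScale_bilin (V : lmodType k) : bilin (fun (a : H) (x : V) => eps a *: x).
Proof.
apply: bilinP => *; rewrite ?(epsD hA) ?(epsZ hA) ?scalerDl ?scalerA //.
  by rewrite scalerDr.
by rewrite mulrC.
Qed.

Lemma phiU_counit m : tlift (fun a x => eps a *: x) (phiU m) = betaiU m.
Proof.
move: m; apply: Omega_ext.
- exact: (lin_comp (tlift_lin (epsScale_bilin _)) phiU_lin).
- exact: betaiU_lin.
move=> g h _; rewrite phiU_omU /HH.sw tlift_tlift; last exact: epsScale_bilin.
rewrite -/(HH.sw _ _ _) betaiU_omU -(counitlL hA _ (omUl_lin _)).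
apply: (sw_ext hA) => a b; rewrite tlift_pure; last exact: epsScale_bilin.
by rewrite (eps_alpha hA).
Qed.

Lemma phiU_mor m : phiU (betaU m) = tmap alpha betaU (phiU m).
Proof.
move: m; apply: Omega_ext.
- exact: (lin_comp phiU_lin betaU_lin).
- exact: (lin_comp (tmap_lin alpha_lin' betaU_lin) phiU_lin).
move=> g h _; rewrite betaU_omU !phiU_omU (sw_alpha hA); last first.
  by apply: tpure_omU_bilin; exact: alpha_lin'.
rewrite (lin_sw hA _ _ (tmap_lin alpha_lin' betaU_lin)); apply: (sw_ext hA) => a b.
by rewrite tmap_pure ?betaU_omU ?(alphaiK hA) ?(alphaK hA) //; [exact: alpha_lin' | exact: betaU_lin].
Qed.

Lemma phiU_d h : phiU (dU h) = tmap id dU (Delta h).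
Proof.
apply: tensor_ext => W F hF.
rewrite tlift_tmap // -/(HH.sw _ _ _) dUE (lin_sw hA _ _ phiU_lin) (lin_sw hA _ _ (tlift_lin hF)).
pose T x y z := F (alpha x) (omU y z).
have hT : trilin T.
  split=> [y z|x z|x y]; rewrite /T.
  - exact: (lin_comp (hF.1 _) alpha_lin').
  - exact: (lin_comp (hF.2 _) (omUl_lin _)).
  - exact: (lin_comp (hF.2 _) (omUr_lin _)).
transitivity (sw h (fun a b => sw a (fun c d => T c d (alphai b)))).
  apply: (sw_ext hA) => a b; rewrite phiU_omU (lin_sw hA _ _ (tlift_lin hF)).
  by apply: (sw_ext hA) => c d; rewrite tlift_pure.
rewrite -(coassoc hA h hT); apply: (sw_ext hA) => a b.
rewrite dUE (lin_sw hA _ _ (hF.2 _)); apply: (sw_ext hA) => c d.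
by rewrite /T (alphaiK hA).
Qed.

Lemma phiU_cov h w g : phiU (lactU (alpha h) (ractU w g)) =
  tmul2 mul lactU (Delta (alpha h)) (tmul2 mul ractU (phiU w) (Delta g)).
Proof.
move: w; apply: Omega_ext.
- exact: (lin_comp phiU_lin (lin_comp (lactU_lin _) (ractU_lin g))).
- exact: (lin_comp (tmul2_lin2 (mul_bilin hA) lactU_bilin _)
           (lin_comp (tmul2_lin1 (mul_bilin hA) ractU_bilin _) phiU_lin)).
move=> c y ey; apply: tensor_ext => W F hF.
transitivity (sw h (fun h1 h2 => sw c (fun c1 c2 => sw g (fun p q => sw p (fun p1 p2 =>
   F (alpha (mul h1 (mul c1 p1))) (omU (mul h2 (mul c2 p2)) (mul y q))))))).
  rewrite ractU_omU // (lin_sw hA _ _ (lactU_lin _)) (lin_sw hA _ _ phiU_lin) (lin_sw hA _ _ (tlift_lin hF)).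
  transitivity (sw g (fun p q => sw h (fun h1 h2 => sw c (fun c1 c2 => sw p (fun p1 p2 =>
   F (alpha (mul h1 (mul c1 p1))) (omU (mul h2 (mul c2 p2)) (mul y q))))))).
    apply: (sw_ext hA) => p q.
    rewrite lactU_omU (alphaK hA) phiU_omU (alphaK hA) (lin_sw hA _ _ (tlift_lin hF)).
    rewrite (sw_ext hA _ (g := fun a b => F (alpha a) (omU b (mul y q)))); last first.
      by move=> a b; rewrite tlift_pure.
    rewrite (sw_mul hA); last exact: (bilin_comp hF alpha_lin' (omUl_lin _)).
    apply: (sw_ext hA) => h1 h2; rewrite (sw_mul hA) //.
    exact: (bilin_comp hF (lin_comp alpha_lin' (mull_lin _)) (lin_comp (omUl_lin _) (mull_lin _))).
  rewrite (sw_exchange hA); apply: (sw_ext hA) => h1 h2.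
  by rewrite (sw_exchange hA).
transitivity (sw h (fun h1 h2 => sw c (fun c1 c2 => sw g (fun e f => sw f (fun f1 f2 =>
   F (mul (alpha h1) (mul (alpha c1) e)) (omU (mul h2 (mul c2 f1)) (mul y (alpha f2)))))))); last first.
  rewrite tlift_tmul2 // -/(HH.sw _ _ _) (sw_alpha hA); last first.
    apply: bilin_tlift_param => c' d.
    exact: (bilin_comp hF (mulr_lin _) (lactU_linc _)).
  apply: (sw_ext hA) => h1 h2.
  rewrite tlift_tmul2; last exact: (bilin_comp hF (mull_lin _) (lactU_lin _)).
  rewrite phiU_omU /HH.sw tlift_tlift; last first.
    apply: bilin_tlift_param => e' f'.
    exact: (bilin_comp hF (lin_comp (mull_lin _) (mulr_lin _)) (lin_comp (lactU_lin _) (ractU_lin _))).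
  rewrite -!/(HH.sw _ _ _); apply: (sw_ext hA) => c1 c2.
  rewrite tlift_pure; last first.
    apply: bilin_tlift_param => e' f'.
    exact: (bilin_comp hF (lin_comp (mull_lin _) (mulr_lin _)) (lin_comp (lactU_lin _) (ractU_lin _))).
  rewrite -/(HH.sw _ _ _); apply: (sw_ext hA) => e' f'.
  rewrite ractU_omU; last by rewrite (eps_alphai hA).
  rewrite (lin_sw hA _ _ (lactU_lin _)) (lin_sw hA _ _ (hF.2 _)); apply: (sw_ext hA) => f1 f2.
  by rewrite lactU_omU (alphaK hA) (alpha_mul hA) (alphaiK hA).
apply: (sw_ext hA) => h1 h2; apply: (sw_ext hA) => c1 c2.
pose G x z t := F (mul (alpha h1) (mul (alpha c1) (alpha x))) (omU (mul h2 (mul c2 z)) (mul y (alpha t))).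
have hG : trilin G.
  split=> [z t|x t|x z]; rewrite /G.
  - exact: (lin_comp (hF.1 _) (lin_comp (mull_lin _) (lin_comp (mull_lin _) alpha_lin'))).
  - exact: (lin_comp (hF.2 _) (lin_comp (omUl_lin _) (lin_comp (mull_lin _) (mull_lin _)))).
  - exact: (lin_comp (hF.2 _) (lin_comp (omUr_lin _) (lin_comp (mull_lin _) alpha_lin'))).
transitivity (sw g (fun e f => sw e (fun e1 e2 => G e1 e2 (alphai f)))).
  apply: (sw_ext hA) => e f; apply: (sw_ext hA) => e1 e2.
  by rewrite /G (alphaiK hA) !(alpha_mul hA).
rewrite -(coassoc hA g hG); apply: (sw_ext hA) => e f; apply: (sw_ext hA) => f1 f2.
by rewrite /G (alphaiK hA).
Qed.

Lemma OmCov : isLeftCovHomFODC A betaU betaiU lactU ractU dU.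
Proof.
split; first exact: OmFODC.
exists phiU; split.
- split.
  + exact: phiU_lin.
  + exact: phiU_coassoc.
  + exact: phiU_counit.
  + exact: phiU_mor.
- exact: phiU_cov.
- exact: phiU_d.
Qed.

End Cov.

End Cov.
Import Cov.

Module P1.
Set Implicit Arguments. Unset Strict Implicit. Unset Printing Implicit Defensive.
Import GRing.Theory.
Set Default Proof Using "All".
Set Maximal Implicit Insertion.
Local Open Scope ring_scope.

Fact ind_key : unit. Proof. by []. Qed.
Section Induced.
Variables (k : fieldType) (M Q : lmodType k) (pi : M -> Q) (N : M -> Prop).
Hypotheses (hpi : lin pi) (hsurj : forall q, exists w, pi w = q)
  (hker : forall w, pi w = 0 <-> N w).

Definition pre (q : Q) : M := projT1 (cid (hsurj q)).
Lemma pre_spec q : pi (pre q) = q.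
Proof. exact: (projT2 (cid (hsurj q))). Qed.

Definition ind (V : lmodType k) (L : M -> V) (q : Q) : V := locked_with ind_key (L (pre q)).
Lemma indU (V : lmodType k) (L : M -> V) q : ind L q = L (pre q).
Proof. by rewrite /ind unlock. Qed.

Lemma indE (V : lmodType k) (L : M -> V) : lin L -> (forall w, N w -> L w = 0) ->
  forall w, ind L (pi w) = L w.
Proof.
move=> hL hN w; rewrite indU; apply/eqP; rewrite -subr_eq0 -(linB hL); apply/eqP; apply: hN.
by apply/hker; rewrite (linB hpi) pre_spec subrr.
Qed.

Lemma surj_ind (P : Q -> Prop) : (forall w, P (pi w)) -> forall q, P q.
Proof. by move=> h q; rewrite -(pre_spec q). Qed.

Lemma ind_lin (V : lmodType k) (L : M -> V) : lin L -> (forall w, N w -> L w = 0) -> lin (ind L).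
Proof.
move=> hL hN a x y; rewrite -(pre_spec x) -(pre_spec y).
by rewrite -hpi !indE // hL.
Qed.

End Induced.

Section Part1.
Variables (k : fieldType) (H : lmodType k) (A : HomHopfData H).
Context {hA : isHomHopf A}.
Local Notation mul := (hmul A).
Local Notation one := (hone A).
Local Notation alpha := (halpha A).
Local Notation alphai := (halphai A).
Local Notation Delta := (hDelta A).
Local Notation eps := (heps A).
Local Notation S := (hS A).
Local Notation Om := (Omega1 A).
Local Notation KE := (kerEps A).
Local Notation omU := (omU A).
Local Notation sw := (sw A).
Local Notation lactU := (lactU A).
Local Notation ractU := (ractU A).
Local Notation betaU := (betaU A).
Local Notation dU := (dU A).

Variables (R : H -> Prop).
Hypotheses (hR0 : forall r, R r -> eps r = 0) (hR : rightHomIdeal A R).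

Definition NUgen (x : Om) : Prop := exists h r, R r /\ x = omU h r.

Lemma NU_iff w : NU A R w <-> inspan NUgen w.
Proof.
split; apply: inspan_mono => y [h [r [hr ->]]]; apply: inspan_gen; exists h, r; split => //.
  by rewrite omegaU -omU_lact.
by rewrite omegaU -omU_lact.
Qed.

Lemma R_alpha r : R r -> R (alpha r).
Proof. by case: hR => _ h _ _; apply: h. Qed.
Lemma R_alphai r : R r -> R (alphai r).
Proof. by case: hR => _ _ h _ /h [x [hx ->]]; rewrite (alphaK hA). Qed.
Lemma R_mul r f : R r -> R (mul r f).
Proof. by case: hR => _ _ _ h /h. Qed.
Lemma R_sub : subspace R.
Proof. by case: hR. Qed.

Lemma NU_gen h r : R r -> NU A R (omU h r).
Proof. by move=> hr; apply/NU_iff; apply: inspan_gen; exists h, r. Qed.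

Lemma NU_sub : subspace (NU A R).
Proof. exact: inspan_subspace. Qed.

Lemma NU_ind (P : Om -> Prop) : subspace P -> (forall h r, R r -> P (omU h r)) ->
  forall w, NU A R w -> P w.
Proof.
move=> hP hg w /NU_iff; apply: inspan_ind => // y [h [r [hr ->]]]; exact: hg.
Qed.

Lemma NU_lin_closed (L : Om -> Om) : lin L -> (forall h r, R r -> NU A R (L (omU h r))) ->
  forall w, NU A R w -> NU A R (L w).
Proof.
move=> hL hg; apply: NU_ind => //; split.
- by rewrite (lin0 hL); apply: (subspace0 NU_sub).
- by move=> x y hx hy; rewrite (linD hL); apply: (subspaceD NU_sub).
- by move=> a x hx; rewrite (linZ hL); apply: (subspaceZ NU_sub).
Qed.

Lemma kill_sub (V : lmodType k) (L : Om -> V) : lin L -> subspace (fun w => L w = 0).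
Proof.
move=> hL; split.
- exact: (lin0 hL).
- by move=> x y hx hy; rewrite (linD hL) hx hy addr0.
- by move=> a x hx; rewrite (linZ hL) hx scaler0.
Qed.

Lemma NU_lact h w : NU A R w -> NU A R (lactU h w).
Proof.
move: w; apply: (@NU_lin_closed (lactU h)); first exact: lactU_lin.
by move=> g r hr; rewrite lactU_omU; apply: NU_gen; apply: R_alpha.
Qed.
Lemma NU_ract w f : NU A R w -> NU A R (ractU w f).
Proof.
move: w; apply: (@NU_lin_closed (fun w => ractU w f)); first exact: ractU_lin.
move=> g r hr /=; rewrite ractU_omU; last exact: hR0.
apply/NU_iff; apply: sw_inspan => a b; apply: inspan_gen; exists (mul g a), (mul r b).
by split => //; apply: R_mul.
Qed.
Lemma NU_beta w : NU A R w -> NU A R (betaU w).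
Proof.
move: w; apply: (@NU_lin_closed betaU); first exact: betaU_lin.
by move=> g r hr; rewrite betaU_omU; apply: NU_gen; apply: R_alpha.
Qed.
Lemma NU_betai w : NU A R w -> NU A R (betaiU w).
Proof.
move: w; apply: (@NU_lin_closed betaiU); first exact: betaiU_lin.
by move=> g r hr; rewrite betaiU_omU; apply: NU_gen; apply: R_alphai.
Qed.

Lemma NU_subbimod : homSubbimoduleU A (NU A R).
Proof.
split.
- exact: NU_sub.
- move=> h w; exact: NU_lact.
- move=> w f; exact: NU_ract.
- move=> w; exact: NU_beta.
- by move=> w hw; exists (betaiU w); split; [apply: NU_betai | rewrite betaiU_K].
Qed.



Section Q.
Variables (Q : lmodType k) (pi : Om -> Q).
Hypotheses (hpi : lin pi) (hsurj : forall q, exists w, pi w = q)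
  (hker : forall w, pi w = 0 <-> NU A R w).

Local Notation indQ := (ind hsurj).
Let pspec q : pi (pre hsurj q) = q := pre_spec hpi hsurj hker q.

Ltac surj m := rewrite -(pspec m); move: (pre hsurj m) => {}m.

Lemma indP (F : Om -> Om) : lin F -> (forall w, NU A R w -> NU A R (F w)) ->
  forall w, indQ (fun x => pi (F x)) (pi w) = pi (F w).
Proof.
move=> hF hN w; apply: (indE hpi hsurj hker) => [|x hx].
  exact: lin_comp hpi hF.
by apply/hker; apply: hN.
Qed.
Lemma indP_lin (F : Om -> Om) : lin F -> (forall w, NU A R w -> NU A R (F w)) ->
  lin (indQ (fun x => pi (F x))).
Proof.
move=> hF hN; apply: (ind_lin hpi hsurj hker) => [|x hx].
  exact: lin_comp hpi hF.
by apply/hker; apply: hN.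
Qed.

Definition gammaQ := indQ (fun w => pi (betaU w)).
Definition gammaiQ := indQ (fun w => pi (betaiU w)).
Definition lactQ h := indQ (fun w => pi (lactU h w)).
Definition ractQ q f := indQ (fun w => pi (ractU w f)) q.
Definition dQ h := pi (dU h).

Lemma gammaQE w : gammaQ (pi w) = pi (betaU w).
Proof. apply: (indP (F := betaU)); [exact: betaU_lin | move=> x; exact: NU_beta]. Qed.
Lemma gammaiQE w : gammaiQ (pi w) = pi (betaiU w).
Proof. apply: (indP (F := betaiU)); [exact: betaiU_lin | move=> x; exact: NU_betai]. Qed.
Lemma lactQE h w : lactQ h (pi w) = pi (lactU h w).
Proof. apply: (indP (F := lactU h)); [exact: lactU_lin | move=> x; exact: NU_lact]. Qed.
Lemma ractQE w f : ractQ (pi w) f = pi (ractU w f).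
Proof. apply: (indP (F := fun w => ractU w f)); [exact: ractU_lin | move=> x; exact: NU_ract]. Qed.

Lemma gammaQ_lin : lin gammaQ.
Proof. apply: (indP_lin (F := betaU)); [exact: betaU_lin | move=> x; exact: NU_beta]. Qed.
Lemma gammaiQ_lin : lin gammaiQ.
Proof. apply: (indP_lin (F := betaiU)); [exact: betaiU_lin | move=> x; exact: NU_betai]. Qed.
Lemma lactQ_lin h : lin (lactQ h).
Proof. apply: (indP_lin (F := lactU h)); [exact: lactU_lin | move=> x; exact: NU_lact]. Qed.
Lemma ractQ_lin f : lin (fun q => ractQ q f).
Proof. apply: (indP_lin (F := fun w => ractU w f)); [exact: ractU_lin | move=> x; exact: NU_ract]. Qed.

Lemma lactQ_linc q : lin (fun h => lactQ h q).
Proof.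
move=> a x y; surj q; rewrite !lactQE -hpi; congr pi; exact: lactU_linc.
Qed.
Lemma ractQ_linf q : lin (ractQ q).
Proof.
move=> a x y; surj q; rewrite !ractQE -hpi; congr pi; exact: ractU_linf.
Qed.

Lemma QBimod : isHomBimodule A gammaQ gammaiQ lactQ ractQ.
Proof.
split.
- exact: gammaQ_lin.
- by move=> q; surj q; rewrite gammaQE gammaiQE betaU_K.
- by move=> q; surj q; rewrite gammaiQE gammaQE betaiU_K.
- by split=> [q|h]; [apply: lactQ_linc | apply: lactQ_lin].
- by split=> [f|q]; [apply: ractQ_lin | apply: ractQ_linf].
- by move=> a m; surj m; rewrite lactQE !gammaQE lactQE lactU_mor.
- by move=> m a; surj m; rewrite ractQE !gammaQE ractQE ractU_mor.
- by move=> a b m; surj m; rewrite !lactQE gammaQE lactQE lassocU.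
- by move=> m; surj m; rewrite lactQE gammaQE lunitU.
- by move=> m a b; surj m; rewrite !ractQE gammaQE ractQE rassocU.
- by move=> m; surj m; rewrite ractQE gammaQE runitU.
- by move=> a m b; surj m; rewrite ractQE lactQE lactQE ractQE bimodU.
Qed.

Lemma QFODC : isHomFODC A gammaQ gammaiQ lactQ ractQ dQ.
Proof.
split.
- exact: QBimod.
- exact: lin_comp hpi dU_lin.
- by move=> h g; rewrite /dQ leibnizU (linD hpi) lactQE ractQE.
- by move=> h; rewrite /dQ dU_alpha gammaQE.
- move=> q; surj q; apply: (inspan_lin hpi) (spanU q) => x [h [g [f ->]]].
  by exists h, g, f; rewrite /dQ lactQE ractQE.
Qed.


Definition phiQ := indQ (fun w => tmap id pi (phiU w)).

Lemma tmap_pi_lin : lin (tmap (@id H) pi).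
Proof. exact: tmap_lin (@lin_id _ _) hpi. Qed.

Lemma phiQ_kill w : NU A R w -> tmap id pi (phiU w) = 0.
Proof.
move: w; apply: NU_ind; first exact: kill_sub (lin_comp tmap_pi_lin phiU_lin).
move=> g r hr; rewrite phiU_omU (lin_sw hA _ _ tmap_pi_lin); apply: (sw_zero hA) => a b.
rewrite tmap_pure; [|exact: (@lin_id _ _)|exact: hpi].
have -> : pi (omU b (alphai r)) = 0 by apply/hker; apply: NU_gen; apply: R_alphai.
exact: (lin0 ((tpure_bilin _ _).2 _)).
Qed.

Lemma phiQE w : phiQ (pi w) = tmap id pi (phiU w).
Proof.
apply: (indE hpi hsurj hker); first exact: lin_comp tmap_pi_lin phiU_lin.
by move=> x hx; apply: phiQ_kill.
Qed.
Lemma phiQ_lin : lin phiQ.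
Proof.
apply: (ind_lin hpi hsurj hker); first exact: lin_comp tmap_pi_lin phiU_lin.
by move=> x hx; apply: phiQ_kill.
Qed.

Ltac lins := try exact: (@lin_id _ _); try exact: hpi; try exact: tmap_pi_lin;
  try exact: alphai_lin'; try exact: alpha_lin'; try exact: phiQ_lin; try exact: gammaQ_lin;
  try exact: gammaiQ_lin; try exact: (hh_Delta_lin hA); try exact: betaU_lin; try exact: betaiU_lin;
  try exact: phiU_lin.

Lemma QComod : isHomLComodule A gammaQ gammaiQ phiQ.
Proof.
split.
- exact: phiQ_lin.
- move=> m; surj m; rewrite phiQE.
  rewrite tmap_tmap //; lins.
  rewrite (tmap_ext (g2 := fun x => tmap id pi (phiU x)) _ (fun a => erefl) phiQE).
  have E1 : tmap alphai (fun x => tmap id pi (phiU x)) (phiU m) =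
      tmap id (tmap id pi) (tmap alphai phiU (phiU m)).
    by rewrite tmap_tmap //; lins.
  rewrite E1 phiU_coassoc -tassoc_nat; lins.
  have E2 : tmap Delta gammaiQ (tmap id pi (phiU m)) = tmap id pi (tmap Delta betaiU (phiU m)).
    rewrite !tmap_tmap //; lins.
    by apply: tmap_ext => // x; rewrite gammaiQE.
  by rewrite E2.
- move=> m; surj m; rewrite phiQE gammaiQE tlift_tmap; last exact: epsScale_bilin.
  rewrite -phiU_counit (lin_tlift _ _ hpi); apply: tlift_ext => a x.
  by rewrite (linZ hpi).
- move=> m; surj m; rewrite gammaQE !phiQE phiU_mor.
  rewrite !tmap_tmap //; lins.
  by apply: tmap_ext => // x; rewrite gammaQE.
Qed.

Lemma QCov_eq h m g : phiQ (lactQ (alpha h) (ractQ m g)) =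
  tmul2 mul lactQ (Delta (alpha h)) (tmul2 mul ractQ (phiQ m) (Delta g)).
Proof.
surj m; rewrite ractQE lactQE !phiQE phiU_cov.
have hm := mul_bilin hA.
rewrite (tmul2_nat_r (g' := lactQ) (p' := pi)) //; last first.
- by move=> b d; rewrite lactQE.
- by move=> d; apply: lactQ_lin.
rewrite (tmul2_nat_l (g' := ractQ) (p' := pi)) //.
- by move=> d; apply: ractQ_lin.
- by move=> b d; rewrite ractQE.
Qed.

Lemma QLeftCov : isLeftCovHomFODC A gammaQ gammaiQ lactQ ractQ dQ.
Proof.
split; first exact: QFODC.
exists phiQ; split.
- exact: QComod.
- exact: QCov_eq.
- by move=> h; rewrite /dQ phiQE phiU_d tmap_tmap //; lins.
Qed.


Lemma omegaQ h : omegaG A lactQ dQ h = pi (omU one (alphai h)).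
Proof.
rewrite -omegaU /omegaG (lin_tlift _ _ hpi); apply: tlift_ext => a b.
by rewrite /dQ lactQE.
Qed.

Lemma keval_lin : lin (@keval k H A).
Proof. by []. Qed.

Lemma RQ_iff h : RGamma A lactQ dQ h <-> R h.
Proof.
split; last first.
  move=> hr; split; first exact: hR0.
  by rewrite omegaQ; apply/hker; apply: NU_gen; apply: R_alphai.
move=> [e0]; rewrite omegaQ => /hker hN.
have hLb : bilin (fun a (x : KE) => eps a *: qp R_sub (keval x)).
  exact: bilin_comp (epsScale_bilin _) (@lin_id _ _) (lin_comp (qp_lin R_sub) keval_lin).
pose P w := tlift (fun a (x : KE) => eps a *: qp R_sub (keval x)) w = 0.
have hgen : forall g r, R r -> P (omU g r).
  move=> g r hr; rewrite /P /Defs.omU tlift_pure // bar_eps0; last exact: hR0.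
  by have := (qp0 R_sub r).2 hr => ->; rewrite scaler0.
have := @NU_ind P (kill_sub (tlift_lin hLb)) hgen _ hN.
rewrite /P /Defs.omU tlift_pure // bar_eps0; last by rewrite (eps_alphai hA).
rewrite (eps_one hA) scale1r => /qp0 hq.
by rewrite -(alphaiK hA h); apply: R_alpha.
Qed.

End Q.
End Part1.

End P1.
Import P1.

Module Anti.
Set Implicit Arguments. Unset Strict Implicit. Unset Printing Implicit Defensive.
Import GRing.Theory.
Set Default Proof Using "All".
Local Open Scope ring_scope.

Section Anti.
Variables (k : fieldType) (H : lmodType k) (A : HomHopfData H) (hA : isHomHopf A).
Local Notation mul := (hmul A).
Local Notation one := (hone A).
Local Notation alpha := (halpha A).
Local Notation alphai := (halphai A).
Local Notation Delta := (hDelta A).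
Local Notation eps := (heps A).
Local Notation S := (hS A).
Local Notation sw := (sw A).

Let ml x : lin (mul x) := (mul_bilin hA).2 x.
Let mr x : lin (fun y => mul y x) := (mul_bilin hA).1 x.
Let al : lin alpha := alpha_lin hA.
Let ali : lin alphai := alphai_lin hA.
Let Sl : lin S := S_lin hA.
Let scl (c : k) : lin (fun x : H => c *: x).
Proof. by move=> a x y; rewrite scalerDr !scalerA mulrC. Qed.

Lemma hom4 u v s t : mul (mul u v) (mul s t) = mul (alpha u) (mul (alphai (mul v s)) t).
Proof.
have e1 : mul (mul u v) (mul s t) = mul (alpha u) (mul v (alphai (mul s t))).
  by rewrite (massoc hA) (alphaiK hA).
have e2 : mul (alphai (mul v s)) t = mul v (alphai (mul s t)).
  rewrite !(alphai_mul hA) -{1}(alphaiK hA t) -(massoc hA) (alphaiK hA) //.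
by rewrite e1 e2.
Qed.

Lemma I_eq x y : sw x (fun u t => sw y (fun v s => mul (mul u v) (mul (S s) (S t)))) =
  (eps x * eps y) *: one.
Proof.
transitivity (sw x (fun u t => eps y *: alpha (mul u (S t)))).
  apply: (sw_ext hA) => u t.
  transitivity (sw y (fun v s => (fun z => mul (alpha u) (mul (alphai z) (S t))) (mul v (S s)))).
    by apply: (sw_ext hA) => v s; rewrite hom4.
  rewrite -(lin_sw hA _ _ (lin_comp (ml _) (lin_comp (mr _) ali))) (antipode_r hA).
  rewrite (alphaiZ hA) (alphai_one hA) (hmulZl hA) (hmulZr hA) (hmul1l hA).
  by rewrite (alpha_mul hA).
rewrite -(lin_sw hA _ _ (lin_comp (scl _) al)) (antipode_r hA) (alphaZ hA) (alpha_one hA).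
by rewrite scalerA mulrC.
Qed.

Lemma S_mul a b : S (mul a b) = mul (S b) (S a).
Proof.
pose T := sw a (fun a1 a2 => sw b (fun b1 b2 => mul (S (mul a1 b1))
  (sw a2 (fun u t => sw b2 (fun v s => mul (mul u v) (mul (S s) (S t))))))).
have T1 : T = S (mul a b).
  rewrite /T; transitivity (sw a (fun a1 a2 => sw b (fun b1 b2 =>
       eps b2 *: (fun y => eps a2 *: alpha (S (mul a1 y))) b1))).
    apply: (sw_ext hA) => a1 a2; apply: (sw_ext hA) => b1 b2.
    by rewrite I_eq (hmulZr hA) (hmul1r hA) scalerA mulrC.
  transitivity (sw a (fun a1 a2 => eps a2 *: (fun x => alpha (S (mul x (alphai b)))) a1)).
    apply: (sw_ext hA) => a1 a2; rewrite (counitrL hA) //.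
    exact: lin_comp (scl _) (lin_comp al (lin_comp Sl (ml _))).
  rewrite (counitrL hA); last exact: lin_comp al (lin_comp Sl (mr _)).
  by rewrite -(alphai_mul hA) (S_alphai hA) (alphaiK hA).
rewrite -T1 /T.
transitivity (sw a (fun a1 a2 => sw a2 (fun u t => sw b (fun b1 b2 => sw b2 (fun v s =>
   mul (S (mul a1 b1)) (mul (mul u v) (mul (S s) (S t)))))))).
  apply: (sw_ext hA) => a1 a2; rewrite (sw_exchange hA); apply: (sw_ext hA) => b1 b2.
  rewrite (lin_sw hA _ _ (ml _)); apply: (sw_ext hA) => u t.
  by rewrite (lin_sw hA _ _ (ml _)).
pose F x u t := sw b (fun b1 b2 => sw b2 (fun v s =>
   mul (S (mul (alpha x) b1)) (mul (mul u v) (mul (S s) (S t))))).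
have hF : trilin F.
  split=> [u t|x t|x u]; rewrite /F.
  - apply: (lin_sw_param hA) => b1 b2; apply: (lin_sw_param hA) => v s.
    exact: lin_comp (mr _) (lin_comp Sl (lin_comp (mr _) al)).
  - apply: (lin_sw_param hA) => b1 b2; apply: (lin_sw_param hA) => v s.
    exact: lin_comp (ml _) (lin_comp (mr _) (mr _)).
  - apply: (lin_sw_param hA) => b1 b2; apply: (lin_sw_param hA) => v s.
    exact: lin_comp (ml _) (lin_comp (ml _) (lin_comp (ml _) Sl)).
transitivity (sw a (fun a1 a2 => sw a2 (fun u t => F (alphai a1) u t))).
  by apply: (sw_ext hA) => a1 a2; apply: (sw_ext hA) => u t; rewrite /F (alphaiK hA).
rewrite (coassoc hA a hF).
pose Z b2 a2 := mul (S (alphai b2)) (S (alphai a2)).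
transitivity (sw a (fun a1 a2 => sw a1 (fun c d => sw b (fun b1 b2 =>
   sw b1 (fun e f => mul (mul (S (mul c e)) (mul d f)) (alpha (Z b2 a2))))))).
  apply: (sw_ext hA) => a1 a2; apply: (sw_ext hA) => c d.
  pose G y v s := mul (S (mul (alpha c) (alpha y))) (mul (mul d v) (mul (S s) (S (alphai a2)))).
  have hG : trilin G.
    split=> [v s|y s|y v]; rewrite /G.
    - exact: lin_comp (mr _) (lin_comp Sl (lin_comp (ml _) al)).
    - exact: lin_comp (ml _) (lin_comp (mr _) (ml _)).
    - exact: lin_comp (ml _) (lin_comp (ml _) (lin_comp (mr _) Sl)).
  transitivity (sw b (fun b1 b2 => sw b2 (fun v s => G (alphai b1) v s))).
    by apply: (sw_ext hA) => b1 b2; apply: (sw_ext hA) => v s; rewrite /G (alphaiK hA).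
  rewrite (coassoc hA b hG); apply: (sw_ext hA) => b1 b2; apply: (sw_ext hA) => e f.
  by rewrite /G /Z -(massoc hA) -(S_alpha hA) (alpha_mul hA).
transitivity (sw a (fun a1 a2 => sw b (fun b1 b2 =>
   mul (sw a1 (fun c d => sw b1 (fun e f => mul (S (mul c e)) (mul d f)))) (alpha (Z b2 a2))))).
  apply: (sw_ext hA) => a1 a2; rewrite (sw_exchange hA); apply: (sw_ext hA) => b1 b2.
  rewrite (lin_sw hA _ _ (mr _)); apply: (sw_ext hA) => c d.
  by rewrite (lin_sw hA _ _ (mr _)).
transitivity (sw a (fun a1 a2 => eps a1 *: sw b (fun b1 b2 => eps b1 *:
   (fun y => alpha (alpha (Z y a2))) b2))).
  apply: (sw_ext hA) => a1 a2; rewrite -(sw_scale hA); apply: (sw_ext hA) => b1 b2.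
  have hb : bilin (fun x y => mul (S x) y).
    exact: bilin_comp (mul_bilin hA) Sl (@lin_id _ _).
  have E : sw (mul a1 b1) (fun x y => mul (S x) y) =
     sw a1 (fun c d => sw b1 (fun e f => mul (S (mul c e)) (mul d f))).
    by rewrite (sw_mul hA).
  rewrite -E (antipode_l hA) (heps_mul hA) (hmulZl hA) (hmul1l hA).
  by rewrite scalerA.
transitivity (sw a (fun a1 a2 => eps a1 *: (fun y => alpha (alpha (Z (alphai b) y))) a2)).
  apply: (sw_ext hA) => a1 a2; rewrite (counitlL hA) //.
  exact: lin_comp al (lin_comp al (lin_comp (mr _) (lin_comp Sl ali))).
rewrite (counitlL hA); last exact: lin_comp al (lin_comp al (lin_comp (ml _) (lin_comp Sl ali))).
by rewrite /Z !(alpha_mul hA) -!(S_alpha hA) !(alphaiK hA).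
Qed.

End Anti.

End Anti.
Import Anti.

Module P2.
Set Implicit Arguments. Unset Strict Implicit. Unset Printing Implicit Defensive.
Import GRing.Theory.
Set Default Proof Using "All".
Set Maximal Implicit Insertion.
Local Open Scope ring_scope.

Section P2.
Variables (k : fieldType) (H : lmodType k) (A : HomHopfData H).
Context {hA : isHomHopf A}.
Local Notation mul := (hmul A).
Local Notation one := (hone A).
Local Notation alpha := (halpha A).
Local Notation alphai := (halphai A).
Local Notation Delta := (hDelta A).
Local Notation eps := (heps A).
Local Notation S := (hS A).
Local Notation Om := (Omega1 A).
Local Notation KE := (kerEps A).
Local Notation omU := (omU A).
Local Notation sw := (sw A).
Local Notation lactU := (lactU A).
Local Notation ractU := (ractU A).
Local Notation betaU := (betaU A).
Local Notation dU := (dU A).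

Variables (G : lmodType k) (gamma gammai : G -> G) (lact : H -> G -> G)
  (ract : G -> H -> G) (d : H -> G).
Hypothesis hLC : isLeftCovHomFODC A gamma gammai lact ract d.

Let hF : isHomFODC A gamma gammai lact ract d := hLC.1.
Let hB : isHomBimodule A gamma gammai lact ract := fo_bimodule hF.

Lemma gamma_lin : lin gamma. Proof. exact: hb_mu_lin hB. Qed.
Lemma gammaK m : gammai (gamma m) = m. Proof. exact: (hb_muK hB m). Qed.
Lemma gammaiK m : gamma (gammai m) = m. Proof. exact: (hb_muiK hB m). Qed.
Lemma lact_bilin : bilin lact. Proof. exact: hb_lact_bilin hB. Qed.
Lemma ract_bilin : bilin ract. Proof. exact: hb_ract_bilin hB. Qed.
Lemma lactl_lin c : lin (lact c). Proof. exact: lact_bilin.2 c. Qed.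
Lemma lactc_lin m : lin (fun c => lact c m). Proof. exact: lact_bilin.1 m. Qed.
Lemma ractm_lin f : lin (fun m => ract m f). Proof. exact: ract_bilin.1 f. Qed.
Lemma ractf_lin m : lin (ract m). Proof. exact: ract_bilin.2 m. Qed.
Lemma lact_mor a m : gamma (lact a m) = lact (alpha a) (gamma m). Proof. exact: (hb_lact_mor hB a m). Qed.
Lemma lassoc a b m : lact (alpha a) (lact b m) = lact (mul a b) (gamma m). Proof. exact: (hb_lassoc hB a b m). Qed.
Lemma lunit m : lact one m = gamma m. Proof. exact: (hb_lunit hB m). Qed.
Lemma runit m : ract m one = gamma m. Proof. exact: (hb_runit hB m). Qed.
Lemma bimod a m b : lact (alpha a) (ract m b) = ract (lact a m) (alpha b). Proof. exact: (hb_bimod hB a m b). Qed.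
Lemma d_lin : lin d. Proof. exact: fo_d_lin hF. Qed.
Lemma leib h g : d (mul h g) = lact h (d g) + ract (d h) g. Proof. exact: (fo_leibniz hF h g). Qed.
Lemma d_alpha h : d (alpha h) = gamma (d h). Proof. exact: (fo_d_alpha hF h). Qed.
Lemma gamma_inj : injective gamma. Proof. exact: can_inj gammaK. Qed.
Lemma d_alphai h : d (alphai h) = gammai (d h).
Proof. by apply: gamma_inj; rewrite gammaiK -d_alpha (alphaiK hA). Qed.

Lemma d_one : d one = 0.
Proof.
have e := leib one one.
rewrite (hmul1l hA) d_alpha lunit runit in e.
have : gamma (d one) = 0.
  by apply: (addrI (gamma (d one))); rewrite addr0 -e.
move=> e2; apply: gamma_inj; by rewrite e2 (lin0 gamma_lin).
Qed.

Definition omG h := sw h (fun a b => lact (S a) (d b)).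
Lemma omGE h : omegaG A lact d h = omG h. Proof. by []. Qed.

Lemma omG_fun_bilin : bilin (fun a b => lact (S a) (d b)).
Proof. exact: bilin_comp lact_bilin (S_lin hA) d_lin. Qed.
Lemma omG_lin : lin omG.
Proof. exact: (sw_lin hA omG_fun_bilin). Qed.
Lemma omG_alpha h : omG (alpha h) = gamma (omG h).
Proof.
rewrite /omG (sw_alpha hA omG_fun_bilin) (lin_sw hA _ _ gamma_lin); apply: (sw_ext hA) => a b.
by rewrite lact_mor (S_alpha hA) d_alpha.
Qed.
Lemma omG_alphai h : omG (alphai h) = gammai (omG h).
Proof. by apply: gamma_inj; rewrite gammaiK -omG_alpha (alphaiK hA). Qed.
Lemma omG_one : omG one = 0.
Proof. by rewrite /omG (sw_one hA omG_fun_bilin) d_one (lin0 (lactl_lin _)). Qed.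

Lemma kev_lin : lin (@keval k H A). Proof. by []. Qed.

Definition piG (w : Om) : G := tlift (fun g (x : KE) => lact g (omG (keval x))) w.
Lemma piG_fun_bilin : bilin (fun g (x : KE) => lact g (omG (keval x))).
Proof. exact: bilin_comp lact_bilin (@lin_id _ _) (lin_comp omG_lin kev_lin). Qed.
Lemma piG_lin : lin piG.
Proof. exact: tlift_lin piG_fun_bilin. Qed.
Lemma piG_omU g h : piG (omU g h) = lact g (omG h).
Proof.
rewrite /piG /Defs.omU tlift_pure; last exact: piG_fun_bilin.
rewrite kev_bar (linB omG_lin) (linZ omG_lin) omG_one scaler0 subr0 //.
Qed.


Lemma piG_lact c w : piG (lactU c w) = lact c (piG w).
Proof.
move: w; apply: Omega_ext.
- exact: lin_comp piG_lin (lactU_lin _).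
- exact: lin_comp (lactl_lin _) piG_lin.
move=> g h _; rewrite lactU_omU !piG_omU omG_alpha -lassoc (alphaiK hA) //.
Qed.

Lemma piG_beta w : piG (betaU w) = gamma (piG w).
Proof.
move: w; apply: Omega_ext.
- exact: lin_comp piG_lin betaU_lin.
- exact: lin_comp gamma_lin piG_lin.
move=> g h _; by rewrite betaU_omU !piG_omU omG_alpha lact_mor.
Qed.

Lemma piG_d h : piG (dU h) = d h.
Proof.
rewrite dUE (lin_sw hA _ _ piG_lin).
transitivity (sw h (fun a b => sw b (fun c e => lact (mul (alphai a) (S c)) (gamma (d e))))).
  apply: (sw_ext hA) => a b; rewrite piG_omU /omG (lin_sw hA _ _ (lactl_lin _)).
  by apply: (sw_ext hA) => c e; rewrite -lassoc (alphaiK hA).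
pose T x c e := lact (mul x (S c)) (gamma (d e)).
have hT : trilin T.
  split=> [c e|x e|x c]; rewrite /T.
  - exact: lin_comp (lactc_lin _) (mulr_lin _).
  - exact: lin_comp (lactc_lin _) (lin_comp (mull_lin _) (S_lin hA)).
  - exact: lin_comp (lactl_lin _) (lin_comp gamma_lin d_lin).
rewrite (coassoc hA h hT) /T.
transitivity (sw h (fun a b => eps a *: gamma (d b))).
  apply: (sw_ext hA) => a b.
  rewrite -(lin_sw hA _ _ (lactc_lin _)) (antipode_r hA) (linZ (lactc_lin _)) lunit.
  by rewrite d_alphai gammaiK.
rewrite (counitlL hA); last exact: lin_comp gamma_lin d_lin.
by rewrite -d_alpha (alphaiK hA).
Qed.

Lemma piG_omU1 h : piG (omU one h) = omG (alpha h).
Proof. by rewrite piG_omU lunit omG_alpha. Qed.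

Lemma piG_omegaU h : piG (omegaG A lactU dU h) = omG h.
Proof. by rewrite omegaU piG_omU1 (alphaiK hA). Qed.

Lemma piG_ract w f : piG (ractU w f) = ract (piG w) f.
Proof.
apply/eqP; rewrite -subr_eq0; apply/eqP.
have hs := spanU1 (hA:=hA) w; move: w hs; apply: (@inspan_ind _ _ _ (fun w => piG (ractU w f) - ract (piG w) f = 0)).
  apply: ker_subspace; apply: lin_sub.
    exact: lin_comp piG_lin (ractU_lin _).
  exact: lin_comp (ractm_lin _) piG_lin.
move=> y [a [b ->]]; apply/eqP; rewrite subr_eq0; apply/eqP.
have rU : forall h g, ractU (dU h) g = dU (mul h g) - lactU h (dU g).
  by move=> h g; rewrite leibnizU addrAC subrr add0r.
have rG : forall h g, ract (d h) g = d (mul h g) - lact h (d g).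
  by move=> h g; rewrite leib addrAC subrr add0r.
rewrite -{1}(alphaiK hA f) -bimodU rU piG_lact (linB piG_lin) piG_d piG_lact piG_d -rG.
by rewrite bimod (alphaiK hA) piG_lact piG_d.
Qed.


Lemma piG_surj q : exists w, piG w = q.
Proof.
have := fo_span hF q; apply: (@inspan_ind _ _ _ (fun q => exists w, piG w = q)).
  split.
  - by exists 0; rewrite (lin0 piG_lin).
  - by move=> x y [w1 <-] [w2 <-]; exists (w1 + w2); rewrite (linD piG_lin).
  - by move=> c x [w1 <-]; exists (c *: w1); rewrite (linZ piG_lin).
move=> x [h [g [f ->]]]; exists (ractU (lactU h (dU g)) f).
by rewrite piG_ract piG_lact piG_d.
Qed.

Lemma omU_ract_id y f : eps y = 0 ->
  sw f (fun p q => lactU (S (alpha p)) (ractU (omU one y) q)) = omU one (mul (alpha y) (alphai f)).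
Proof.
move=> ey.
pose T x c e := omU (mul (S (alpha x)) (alpha c)) (mul (alpha y) (alpha e)).
have hT : trilin T.
  split=> [c e|x e|x c]; rewrite /T.
  - exact: lin_comp (omUl_lin _) (lin_comp (mulr_lin _) (lin_comp (S_lin hA) alpha_lin')).
  - exact: lin_comp (omUl_lin _) (lin_comp (mull_lin _) alpha_lin').
  - exact: lin_comp (omUr_lin _) (lin_comp (mull_lin _) alpha_lin').
transitivity (sw f (fun p q => sw q (fun c e => T (alphai p) c e))).
  apply: (sw_ext hA) => p q; rewrite ractU_omU // (lin_sw hA _ _ (lactU_lin _)).
  apply: (sw_ext hA) => c e; rewrite lactU_omU (hmul1l hA) (alpha_mul hA) /T (alphaiK hA).
  by rewrite -(S_alphai hA) (alphaK hA).
rewrite (coassoc hA f hT) /T.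
transitivity (sw f (fun p q => eps p *: (fun z => omU one (mul (alpha y) z)) q)).
  apply: (sw_ext hA) => p q; rewrite (alphaiK hA).
  have hL : lin (fun x => omU (alpha x) (mul (alpha y) q)).
    exact: lin_comp (omUl_lin _) alpha_lin'.
  transitivity (sw p (fun c e => (fun x => omU (alpha x) (mul (alpha y) q)) (mul (S c) e))).
    by apply: (sw_ext hA) => c e; rewrite /= (alpha_mul hA) (S_alpha hA).
  rewrite -(lin_sw hA _ _ hL) (antipode_l hA) (alphaZ hA) (alpha_one hA).
  by rewrite omUZ1.
rewrite (counitlL hA) //.
exact: lin_comp (omUr_lin _) (mull_lin _).
Qed.

Definition RG := RGamma A lact d.

Lemma RG_eps r : RG r -> eps r = 0.
Proof. by case. Qed.

Lemma gammai0 : gammai 0 = 0.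
Proof. by rewrite -{1}(lin0 gamma_lin) gammaK. Qed.

Lemma RG_ideal : rightHomIdeal A RG.
Proof.
split.
- split.
  + by split; [exact: (eps0 hA) | rewrite omGE (lin0 omG_lin)].
  + move=> x y [e1 o1] [e2 o2]; split; first by rewrite (epsD hA) e1 e2 addr0.
    by rewrite omGE (linD omG_lin) -!omGE o1 o2 addr0.
  + move=> c x [e1 o1]; split; first by rewrite (epsZ hA) e1 mulr0.
    by rewrite omGE (linZ omG_lin) -omGE o1 scaler0.
- move=> x [e1 o1]; split; first by rewrite (eps_alpha hA).
  by rewrite omGE omG_alpha -omGE o1 (lin0 gamma_lin).
- move=> y [e1 o1]; exists (alphai y); split; last by rewrite (alphaiK hA).
  split; first by rewrite (eps_alphai hA).
  by rewrite omGE omG_alphai -omGE o1 gammai0.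
- move=> r f [e1 o1]; split; first by rewrite (heps_mul hA) e1 mul0r.
  rewrite omGE -piG_omegaU omegaU (alphai_mul hA).
  rewrite -{1}(alphaiK hA (alphai r)) -omU_ract_id; last by rewrite !(eps_alphai hA).
  rewrite (lin_sw hA _ _ piG_lin); apply: (sw_zero hA) => p q.
  rewrite piG_lact piG_ract piG_omU1 (alphaiK hA) omG_alphai -omGE o1 gammai0.
  by rewrite (lin0 (ractm_lin _)) (lin0 (lactl_lin _)).
Qed.


Section Ker.
Variable phi : G -> tensor H G.
Hypotheses (hphil : lin phi)
  (hcov : forall h w g, phi (lact (alpha h) (ract w g)) =
           tmul2 mul lact (Delta (alpha h)) (tmul2 mul ract (phi w) (Delta g)))
  (hphid : forall h, phi (d h) = tmap id d (Delta h)).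

Lemma phi_ad (W : lmodType k) (F : H -> G -> W) a b : bilin F ->
  tlift F (phi (lact a (d b))) = sw a (fun a1 a2 => sw b (fun b1 b2 => F (mul a1 b1) (lact a2 (d b2)))).
Proof.
move=> hFF.
have -> : lact a (d b) = lact (alpha (alphai a)) (ract (d (alphai b)) one).
  by rewrite runit -d_alpha !(alphaiK hA).
rewrite hcov (alphaiK hA) tlift_tmul2 // -/(sw a _); apply: (sw_ext hA) => a1 a2.
rewrite tlift_tmul2; last exact: bilin_comp hFF (mull_lin _) (lactl_lin _).
rewrite hphid tlift_tmap; last first.
  apply: bilin_tlift_param => e f.
  exact: bilin_comp hFF (lin_comp (mull_lin _) (mulr_lin _)) (lin_comp (lactl_lin _) (ractm_lin _)).
transitivity (sw (alphai b) (fun c' b' => F (mul a1 (alpha c')) (lact a2 (gamma (d b'))))).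
  apply: (sw_ext hA) => c' b'; rewrite -/(sw one _) (sw_one hA).
    by rewrite (hmul1r hA) runit.
  exact: bilin_comp hFF (lin_comp (mull_lin _) (mull_lin _)) (lin_comp (lactl_lin _) (ractf_lin _)).
rewrite (sw_alphai hA); last first.
  exact: bilin_comp hFF (lin_comp (mull_lin _) alpha_lin') (lin_comp (lactl_lin _) (lin_comp gamma_lin d_lin)).
by apply: (sw_ext hA) => b1 b2; rewrite !(alphaiK hA) d_alphai gammaiK.
Qed.

Definition P (m : G) : G := tlift (fun c n => lact (S c) n) (phi m).
Lemma P_fun_bilin : bilin (fun c n => lact (S c) n).
Proof. exact: bilin_comp lact_bilin (S_lin hA) (@lin_id _ _). Qed.
Lemma P_lin : lin P.
Proof. exact: lin_comp (tlift_lin P_fun_bilin) hphil. Qed.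

Lemma P_ad a b : P (lact a (d b)) = eps a *: omG (alpha b).
Proof.
rewrite /P phi_ad; last exact: P_fun_bilin.
transitivity (sw b (fun b1 b2 => sw a (fun a1 a2 =>
   (fun x => lact (mul (S b1) (alphai x)) (gamma (d b2))) (mul (S a1) a2)))).
  rewrite (sw_exchange hA); apply: (sw_ext hA) => b1 b2; apply: (sw_ext hA) => a1 a2.
  rewrite (S_mul hA) -{1}(alphaiK hA (mul (S b1) (S a1))) lassoc; congr lact.
  rewrite (alphai_mul hA) -{1}(alphaiK hA a2) -(massoc hA) (alphaiK hA).
  by rewrite (alphai_mul hA).
transitivity (sw b (fun b1 b2 => eps a *: lact (alpha (S b1)) (gamma (d b2)))).
  apply: (sw_ext hA) => b1 b2.
  have hL : lin (fun x => lact (mul (S b1) (alphai x)) (gamma (d b2))).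
    exact: lin_comp (lactc_lin _) (lin_comp (mull_lin _) alphai_lin').
  rewrite -(lin_sw hA a (fun a1 a2 => mul (S a1) a2) hL) (antipode_l hA) /=.
  by rewrite (alphaiZ hA) (alphai_one hA) (hmulZr hA) (hmul1r hA) (linZ (lactc_lin _)).
rewrite (sw_scale hA) omG_alpha /omG (lin_sw hA _ _ gamma_lin); congr (_ *: _).
by apply: (sw_ext hA) => b1 b2; rewrite lact_mor.
Qed.


Lemma P_im m : exists x, P m = omG x.
Proof.
have [w <-] := piG_surj m.
have hs := spanU1 (hA:=hA) w; move: w hs.
apply: (@inspan_ind _ _ _ (fun w => exists x, P (piG w) = omG x)).
  split.
  - by exists 0; rewrite (lin0 piG_lin) (lin0 P_lin) (lin0 omG_lin).
  - move=> x y [x1 e1] [y1 e2]; exists (x1 + y1).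
    by rewrite (linD piG_lin) (linD P_lin) e1 e2 (linD omG_lin).
  - move=> c x [x1 e1]; exists (c *: x1).
    by rewrite (linZ piG_lin) (linZ P_lin) e1 (linZ omG_lin).
move=> y [a [b ->]]; exists (eps a *: alpha b).
by rewrite piG_lact piG_d P_ad (linZ omG_lin).
Qed.

Local Notation NUG := (NU A RG).
Let RGe : forall r, RG r -> eps r = 0 := fun r h => RG_eps h.
Let hNU : subspace NUG := NU_sub (@RGe) RG_ideal.
Local Notation V := (quotM hNU).
Local Notation qpN := (qp hNU).

Definition sig (y : G) : V :=
  match pselect (exists x, omG x = y) with
  | left e => qpN (omU one (alphai (projT1 (cid e))))
  | right _ => 0
  end.

Lemma sig_omG x : sig (omG x) = qpN (omU one (alphai x)).
Proof.
rewrite /sig; case: pselect => [e|ne]; last by exfalso; apply: ne; exists x.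
move: (projT2 (cid e)); set x' := projT1 (cid e) => hx.
apply/qpE; rewrite -omUB2 -(linB alphai_lin') -omU_bar.
apply: (NU_gen (@RGe) RG_ideal); split; first exact: eps_keval.
rewrite omGE kev_bar (linB omG_lin) (linZ omG_lin) omG_one scaler0 subr0.
by rewrite omG_alphai (linB omG_lin) hx subrr gammai0.
Qed.

Lemma sigP_lin : lin (fun m => sig (P m)).
Proof.
move=> c m m'; have [x ex] := P_im m; have [x' ex'] := P_im m'.
rewrite (linD P_lin) (linZ P_lin) ex ex' -(linZ omG_lin) -(linD omG_lin) !sig_omG.
by rewrite (linD alphai_lin') (linZ alphai_lin') omUD2 omUZ2 (qp_lin hNU).
Qed.

Definition lactV (c : H) (v : V) : V := qmap (lactU c) v.
Lemma lactVE c w : lactV c (qpN w) = qpN (lactU c w).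
Proof.
apply: qmapE; first exact: lactU_lin.
by move=> x hx; apply: (NU_lact (@RGe) RG_ideal).
Qed.
Lemma lactV_bilin : bilin lactV.
Proof.
split=> [v|c] a x y.
  rewrite -(qp_repr v) !lactVE -(qp_lin hNU); congr qpN; exact: lactU_linc.
rewrite -(qp_repr x) -(qp_repr y) -(qp_lin hNU) !lactVE -(qp_lin hNU); congr qpN.
exact: lactU_lin.
Qed.

Definition Theta (m : G) : V := tlift (fun c n => lactV c (sig (P n))) (phi m).
Lemma Theta_fun_bilin : bilin (fun c n => lactV c (sig (P n))).
Proof. exact: bilin_comp lactV_bilin (@lin_id _ _) sigP_lin. Qed.
Lemma Theta_lin : lin Theta.
Proof. exact: lin_comp (tlift_lin Theta_fun_bilin) hphil. Qed.

Lemma Theta_pi w : Theta (piG w) = qpN w.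
Proof.
apply/eqP; rewrite -subr_eq0; apply/eqP.
have hs := spanU1 (hA:=hA) w; move: w hs.
apply: (@inspan_ind _ _ _ (fun w => Theta (piG w) - qpN w = 0)).
  apply: ker_subspace; apply: lin_sub; first exact: lin_comp Theta_lin piG_lin.
  exact: qp_lin.
move=> y [a [b ->]]; apply/eqP; rewrite subr_eq0; apply/eqP.
rewrite piG_lact piG_d /Theta phi_ad; last exact: Theta_fun_bilin.
transitivity (sw a (fun a1 a2 => eps a2 *:
   (fun x => sw b (fun b1 b2 => qpN (lactU (mul x b1) (omU one b2)))) a1)).
  apply: (sw_ext hA) => a1 a2; rewrite -(sw_scale hA); apply: (sw_ext hA) => b1 b2.
  rewrite P_ad -(linZ omG_lin) sig_omG (linZ alphai_lin') (alphaK hA) omUZ2 (linZ (qp_lin hNU)).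
  by rewrite (linZ (lactV_bilin.2 _)) lactVE.
rewrite (counitrL hA); last first.
  apply: (lin_sw_param hA) => b1 b2.
  exact: lin_comp (qp_lin hNU) (lin_comp (lactU_linc _) (mulr_lin _)).
rewrite dUE (lin_sw hA _ _ (lactU_lin _)) (lin_sw hA _ _ (qp_lin hNU)).
apply: (sw_ext hA) => b1 b2; congr qpN.
by rewrite !lactU_omU (hmul1r hA) (alphaiK hA).
Qed.

Lemma piG_ker w : piG w = 0 -> NUG w.
Proof.
move=> e; apply/(qp0 hNU); rewrite -Theta_pi e; exact: (lin0 Theta_lin).
Qed.

End Ker.
End P2.

End P2.
Import P2.

Unset Maximal Implicit Insertion.
Set Implicit Arguments. Unset Strict Implicit. Unset Printing Implicit Defensive.
Import GRing.Theory.
Local Open Scope ring_scope.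

Theorem mainTheorem2 (k : fieldType) (H : lmodType k) (A : HomHopfData H) :
  isHomHopf A -> bijective (hS A) ->
  (* (1) *)
  (forall R : H -> Prop,
     (forall r, R r -> heps A r = 0) ->
     rightHomIdeal A R ->
     homSubbimoduleU A (NU A R) /\
     (forall (Q : lmodType k) (pi : Omega1 A -> Q),
        lin pi -> (forall q, exists w, pi w = q) ->
        (forall w, pi w = 0 <-> NU A R w) ->
        exists (gamma gammai : Q -> Q) (lactQ : H -> Q -> Q) (ractQ : Q -> H -> Q),
          [/\ (forall w, gamma (pi w) = pi (betaU A w)),
              (forall h w, lactQ h (pi w) = pi (lactU A h w)),
              (forall w h, ractQ (pi w) h = pi (ractU A w h)),
              isLeftCovHomFODC A gamma gammai lactQ ractQ (fun h => pi (dU A h)) &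
              (forall h, RGamma A lactQ (fun h => pi (dU A h)) h <-> R h)])) /\
  (* (2) *)
  (forall (G : lmodType k) (gamma gammai : G -> G) (lact : H -> G -> G)
          (ract : G -> H -> G) (d : H -> G),
     isLeftCovHomFODC A gamma gammai lact ract d ->
     [/\ rightHomIdeal A (RGamma A lact d),
         (forall h, RGamma A lact d h -> heps A h = 0) &
         exists pi : Omega1 A -> G,
           [/\ lin pi, (forall q, exists w, pi w = q),
               (forall w, pi w = 0 <-> NU A (RGamma A lact d) w),
               (forall h w, pi (lactU A h w) = lact h (pi w)) &
               [/\ (forall w h, pi (ractU A w h) = ract (pi w) h),
                   (forall w, pi (betaU A w) = gamma (pi w)) &
                   (forall h, pi (dU A h) = d h)]]]).
Proof.
move=> hA _; split.
  move=> R hR0 hR; split; first exact: (NU_subbimod hR0 hR).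
  move=> Q pi hpi hsurj hker.
  exists (gammaQ hsurj), (gammaiQ hsurj), (lactQ hsurj), (ractQ hsurj); split.
  - exact: (gammaQE hR0 hR hpi hsurj hker).
  - exact: (lactQE hR0 hR hpi hsurj hker).
  - exact: (ractQE hR0 hR hpi hsurj hker).
  - exact: (QLeftCov hR0 hR hpi hsurj hker).
  - exact: (RQ_iff hR0 hR hpi hsurj hker).
move=> G gamma gammai lact ract d hLC.
have [phi [hcomod hcov hphid]] := hLC.2.
have hphil : lin phi := hc_rho_lin hcomod.
have hRe : forall r, RGamma A lact d r -> heps A r = 0 by move=> r [].
split.
- exact: (RG_ideal hLC).
- exact: hRe.
exists (piG lact d); split.
- exact: (piG_lin hLC).
- exact: (piG_surj hLC).
- move=> w; split; first exact: (piG_ker hLC hphil hcov hphid).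
  apply: (NU_ind hRe (RG_ideal hLC) (P := fun w => piG lact d w = 0)).
    exact: ker_subspace (piG_lin hLC).
  move=> h r [er o]; rewrite (piG_omU hLC) -(omGE hLC) o.
  exact: (lin0 (lactl_lin hLC _)).
- exact: (piG_lact hLC).
split.
- exact: (piG_ract hLC).
- exact: (piG_beta hLC).
- exact: (piG_d hLC).
Qed.
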